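(* Consider the following nine families of $7$-dimensional real nilpotent Lie algebras (each given by $(de^1,\dots,de^7)$): $147E=(0,0,0,e^{12},e^{23},-e^{13},\lambda e^{26}-e^{15}-(\lambda-1)e^{34})$, $\lambda\neq0,1$; $1357M=(0,0,e^{12},0,e^{24}+e^{13},e^{14},-(\lambda-1)e^{34}+e^{15}+\lambda e^{26})$, $\lambda\neq0$; $1357N=(0,0,e^{12},0,e^{13}+e^{24},e^{14},e^{46}+e^{34}+e^{15}+\lambda e^{23})$; $1357S=(0,0,e^{12},0,e^{13},e^{24}+e^{23},e^{25}+e^{34}+e^{16}+e^{15}+\lambda e^{26})$, $\lambda\neq1$; $12457N=(0,0,e^{12},e^{13},e^{23},e^{24}+e^{15},\lambda e^{25}+e^{26}+e^{34}-e^{35}+e^{16}+e^{14})$; $123457I=(0,0,e^{12},e^{13},e^{14}+e^{23},e^{15}+e^{24},\lambda e^{25}-(\lambda-1)e^{34}+e^{16})$; $147E1=(0,0,0,e^{12},e^{23},-e^{13},2e^{26}-2e^{34}-\lambda e^{16}+\lambda e^{25})$, $\lambda>1$; $1357QRS1=(0,0,e^{12},0,e^{13}+e^{24},e^{14}-e^{23},\lambda e^{26}+e^{15}-(\lambda-1)e^{34})$, $\lambda\neq0$; $12457N2=(0,0,e^{12},e^{13},e^{23},-e^{14}-e^{25},e^{15}-e^{35}+e^{16}+e^{24}+\lambda e^{25})$, $\lambda\ge0$. Among all members of these families, exactly three admit a calibrated $\mathrm{G}_2$-structure: $1357N$ with $\lambda=1$, $1357S$ with $\lambda=-3$, and $147E1$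 with $\lambda=2$. Explicitly, the following coframes $(f^1,\dots,f^7)$ define calibrated $\mathrm{G}_2$-structures on them: for $1357N(\lambda=1)$: $f^1=\sqrt3(2e^1-e^7-e^6-e^5)$, $f^2=\sqrt3(e^4+e^3-2e^2-e^6+e^5)$, $f^3=2e^3-e^6$, $f^4=2e^5$, $f^5=-e^3+3e^4+e^5-e^6$, $f^6=2e^3-e^5-e^6+3e^7$, $f^7=-\sqrt3 e^6$; for $1357S(\lambda=-3)$: $f^1=\sqrt7(2e^1+e^2-e^5+e^6)$, $f^2=7e^2+3e^5+5e^6$, $f^3=\sqrt7(e^3+2e^4-\tfrac32e^7)$, $f^4=3e^3+\tfrac72e^7$, $f^5=-\sqrt{70}\,e^6$, $f^6=\sqrt{10}(2e^5+e^6)$, $f^7=-2\sqrt{10}\,e^3$; for $147E1(\lambda=2)$: $f^1=\sqrt3(2e^1+e^5-e^2+e^6)$, $f^2=3e^2-e^5+e^6$, $f^3=e^3+2e^4$, $f^4=\sqrt3(e^3+e^7)$, $f^5=\sqrt2(e^6-e^5)$, $f^6=\sqrt6(e^5+e^6)$, $f^7=2\sqrt2(e^4-e^3)$.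
   Context: Each Lie algebra is given by a basis $e^1,\dots,e^7$ of its dual and the values $de^i$ of the Chevalley–Eilenberg differential; $e^{ij}=e^i\wedge e^j$. A coframe $(f^1,\dots,f^7)$ (basis of $\mathfrak g^*$) defines the $\mathrm{G}_2$-structure given by the $3$-form $\varphi=f^{127}+f^{347}+f^{567}+f^{135}-f^{236}-f^{146}-f^{245}$; a $\mathrm{G}_2$-structure on $\mathfrak g$ is a $3$-form of this type for some coframe, and it is calibrated if $d\varphi=0$. *)

(* Defs.v *)
From Stdlib Require Import Reals List.
Import ListNotations.
Open Scope R_scope.

(* Vectors of g = R^7 and covectors (elements of g* ) are both encoded as
   functions nat -> R; only the components 1..7 are ever used
   (index i <-> basis vector e_i resp. dual basis covector e^i). *)
Definition vec := nat -> R.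

Definition sum7 (g : nat -> R) : R :=
  g 1%nat + g 2%nat + g 3%nat + g 4%nat + g 5%nat + g 6%nat + g 7%nat.

Definition ev1 (c : nat -> R) (x : vec) : R := sum7 (fun j => c j * x j).

(* A 2-form given as a formal sum  sum c e^{ij}, with e^{ij}(x,y)=x_i y_j - x_j y_i *)
Definition form2 := list (R * nat * nat).
Definition ev2 (w : form2) (x y : vec) : R :=
  fold_right (fun t acc => let '(c, i, j) := t in c * (x i * y j - x j * y i) + acc) 0 w.

(* A 7-dimensional Lie algebra, given by de^k for k = 1..7 *)
Definition lie7 := nat -> form2.

(* Lie bracket determined by the Chevalley--Eilenberg differential:
   de^k(x,y) = - e^k([x,y]). *)
Definition br (L : lie7) (x y : vec) : vec := fun k => - ev2 (L k) x y.

(* A coframe candidate: f a = coefficient vector of f^a in the basis e^1..e^7 *)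
Definition frame := nat -> (nat -> R).

(* f^a /\ f^b /\ f^c evaluated on (x,y,z): a 3x3 determinant *)
Definition w3 (f : frame) (a b c : nat) (x y z : vec) : R :=
  let A1 := ev1 (f a) x in let A2 := ev1 (f a) y in let A3 := ev1 (f a) z in
  let B1 := ev1 (f b) x in let B2 := ev1 (f b) y in let B3 := ev1 (f b) z in
  let C1 := ev1 (f c) x in let C2 := ev1 (f c) y in let C3 := ev1 (f c) z in
  A1 * (B2 * C3 - B3 * C2) - A2 * (B1 * C3 - B3 * C1) + A3 * (B1 * C2 - B2 * C1).

Definition phi (f : frame) (x y z : vec) : R :=
  w3 f 1 2 7 x y z + w3 f 3 4 7 x y z + w3 f 5 6 7 x y z + w3 f 1 3 5 x y z
  - w3 f 2 3 6 x y z - w3 f 1 4 6 x y z - w3 f 2 4 5 x y z.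

(* Chevalley--Eilenberg differential of the 3-form phi:
   d phi(x0,..,x3) = sum_{i<j} (-1)^{i+j} phi([xi,xj], x0,..^i..^j..,x3) *)
Definition dphi (L : lie7) (f : frame) (x0 x1 x2 x3 : vec) : R :=
  - phi f (br L x0 x1) x2 x3 + phi f (br L x0 x2) x1 x3 - phi f (br L x0 x3) x1 x2
  - phi f (br L x1 x2) x0 x3 + phi f (br L x1 x3) x0 x2 - phi f (br L x2 x3) x0 x1.

Definition is_coframe (f : frame) : Prop :=
  forall a : nat -> R,
    (forall x : vec, sum7 (fun i => a i * ev1 (f i) x) = 0) ->
    forall i : nat, (1 <= i <= 7)%nat -> a i = 0.

Definition calibrated (L : lie7) (f : frame) : Prop :=
  is_coframe f /\ forall x0 x1 x2 x3 : vec, dphi L f x0 x1 x2 x3 = 0.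

Definition admits_calibrated_G2 (L : lie7) : Prop := exists f, calibrated L f.

Definition co (l : list (R * nat)) : nat -> R :=
  fun j => fold_right (fun t acc => let '(c, i) := t in
                         (if Nat.eqb i j then c else 0) + acc) 0 l.

Definition L147E (l : R) : lie7 := fun k => match k with
  | 4%nat => [(1, 1%nat, 2%nat)]
  | 5%nat => [(1, 2%nat, 3%nat)]
  | 6%nat => [(-1, 1%nat, 3%nat)]
  | 7%nat => [(l, 2%nat, 6%nat); (-1, 1%nat, 5%nat); (-(l-1), 3%nat, 4%nat)]
  | _ => [] end.

Definition L1357M (l : R) : lie7 := fun k => match k with
  | 3%nat => [(1, 1%nat, 2%nat)]
  | 5%nat => [(1, 2%nat, 4%nat); (1, 1%nat, 3%nat)]
  | 6%nat => [(1, 1%nat, 4%nat)]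
  | 7%nat => [(-(l-1), 3%nat, 4%nat); (1, 1%nat, 5%nat); (l, 2%nat, 6%nat)]
  | _ => [] end.

Definition L1357N (l : R) : lie7 := fun k => match k with
  | 3%nat => [(1, 1%nat, 2%nat)]
  | 5%nat => [(1, 1%nat, 3%nat); (1, 2%nat, 4%nat)]
  | 6%nat => [(1, 1%nat, 4%nat)]
  | 7%nat => [(1, 4%nat, 6%nat); (1, 3%nat, 4%nat); (1, 1%nat, 5%nat); (l, 2%nat, 3%nat)]
  | _ => [] end.

Definition L1357S (l : R) : lie7 := fun k => match k with
  | 3%nat => [(1, 1%nat, 2%nat)]
  | 5%nat => [(1, 1%nat, 3%nat)]
  | 6%nat => [(1, 2%nat, 4%nat); (1, 2%nat, 3%nat)]
  | 7%nat => [(1, 2%nat, 5%nat); (1, 3%nat, 4%nat); (1, 1%nat, 6%nat); (1, 1%nat, 5%nat);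
              (l, 2%nat, 6%nat)]
  | _ => [] end.

Definition L12457N (l : R) : lie7 := fun k => match k with
  | 3%nat => [(1, 1%nat, 2%nat)]
  | 4%nat => [(1, 1%nat, 3%nat)]
  | 5%nat => [(1, 2%nat, 3%nat)]
  | 6%nat => [(1, 2%nat, 4%nat); (1, 1%nat, 5%nat)]
  | 7%nat => [(l, 2%nat, 5%nat); (1, 2%nat, 6%nat); (1, 3%nat, 4%nat); (-1, 3%nat, 5%nat);
              (1, 1%nat, 6%nat); (1, 1%nat, 4%nat)]
  | _ => [] end.

Definition L123457I (l : R) : lie7 := fun k => match k with
  | 3%nat => [(1, 1%nat, 2%nat)]
  | 4%nat => [(1, 1%nat, 3%nat)]
  | 5%nat => [(1, 1%nat, 4%nat); (1, 2%nat, 3%nat)]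
  | 6%nat => [(1, 1%nat, 5%nat); (1, 2%nat, 4%nat)]
  | 7%nat => [(l, 2%nat, 5%nat); (-(l-1), 3%nat, 4%nat); (1, 1%nat, 6%nat)]
  | _ => [] end.

Definition L147E1 (l : R) : lie7 := fun k => match k with
  | 4%nat => [(1, 1%nat, 2%nat)]
  | 5%nat => [(1, 2%nat, 3%nat)]
  | 6%nat => [(-1, 1%nat, 3%nat)]
  | 7%nat => [(2, 2%nat, 6%nat); (-2, 3%nat, 4%nat); (-l, 1%nat, 6%nat); (l, 2%nat, 5%nat)]
  | _ => [] end.

Definition L1357QRS1 (l : R) : lie7 := fun k => match k with
  | 3%nat => [(1, 1%nat, 2%nat)]
  | 5%nat => [(1, 1%nat, 3%nat); (1, 2%nat, 4%nat)]
  | 6%nat => [(1, 1%nat, 4%nat); (-1, 2%nat, 3%nat)]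
  | 7%nat => [(l, 2%nat, 6%nat); (1, 1%nat, 5%nat); (-(l-1), 3%nat, 4%nat)]
  | _ => [] end.

Definition L12457N2 (l : R) : lie7 := fun k => match k with
  | 3%nat => [(1, 1%nat, 2%nat)]
  | 4%nat => [(1, 1%nat, 3%nat)]
  | 5%nat => [(1, 2%nat, 3%nat)]
  | 6%nat => [(-1, 1%nat, 4%nat); (-1, 2%nat, 5%nat)]
  | 7%nat => [(1, 1%nat, 5%nat); (-1, 3%nat, 5%nat); (1, 1%nat, 6%nat); (1, 2%nat, 4%nat);
              (l, 2%nat, 5%nat)]
  | _ => [] end.

Definition frame_1357N : frame := fun a => match a with
  | 1%nat => co [(2 * sqrt 3, 1%nat); (- sqrt 3, 7%nat); (- sqrt 3, 6%nat); (- sqrt 3, 5%nat)]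
  | 2%nat => co [(sqrt 3, 4%nat); (sqrt 3, 3%nat); (-2 * sqrt 3, 2%nat); (- sqrt 3, 6%nat);
                 (sqrt 3, 5%nat)]
  | 3%nat => co [(2, 3%nat); (-1, 6%nat)]
  | 4%nat => co [(2, 5%nat)]
  | 5%nat => co [(-1, 3%nat); (3, 4%nat); (1, 5%nat); (-1, 6%nat)]
  | 6%nat => co [(2, 3%nat); (-1, 5%nat); (-1, 6%nat); (3, 7%nat)]
  | 7%nat => co [(- sqrt 3, 6%nat)]
  | _ => co [] end.

Definition frame_1357S : frame := fun a => match a with
  | 1%nat => co [(2 * sqrt 7, 1%nat); (sqrt 7, 2%nat); (- sqrt 7, 5%nat); (sqrt 7, 6%nat)]
  | 2%nat => co [(7, 2%nat); (3, 5%nat); (5, 6%nat)]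
  | 3%nat => co [(sqrt 7, 3%nat); (2 * sqrt 7, 4%nat); (- (3/2) * sqrt 7, 7%nat)]
  | 4%nat => co [(3, 3%nat); (7/2, 7%nat)]
  | 5%nat => co [(- sqrt 70, 6%nat)]
  | 6%nat => co [(2 * sqrt 10, 5%nat); (sqrt 10, 6%nat)]
  | 7%nat => co [(-2 * sqrt 10, 3%nat)]
  | _ => co [] end.

Definition frame_147E1 : frame := fun a => match a with
  | 1%nat => co [(2 * sqrt 3, 1%nat); (sqrt 3, 5%nat); (- sqrt 3, 2%nat); (sqrt 3, 6%nat)]
  | 2%nat => co [(3, 2%nat); (-1, 5%nat); (1, 6%nat)]
  | 3%nat => co [(1, 3%nat); (2, 4%nat)]
  | 4%nat => co [(sqrt 3, 3%nat); (sqrt 3, 7%nat)]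
  | 5%nat => co [(sqrt 2, 6%nat); (- sqrt 2, 5%nat)]
  | 6%nat => co [(sqrt 6, 5%nat); (sqrt 6, 6%nat)]
  | 7%nat => co [(2 * sqrt 2, 4%nat); (-2 * sqrt 2, 3%nat)]
  | _ => co [] end.

(* Main.v *)
Require Import Defs.
From Stdlib Require Import Reals List Lia Lra Classical Nsatz.
Import ListNotations.
Open Scope R_scope.



Fixpoint sumn (n : nat) (g : nat -> R) : R :=
  match n with O => 0 | S n => sumn n g + g n end.

Lemma sumn_ext n g h : (forall i, (i < n)%nat -> g i = h i) -> sumn n g = sumn n h.
Proof. induction n; simpl; intros H; [reflexivity|]. rewrite IHn by (intros; apply H; lia). rewrite H by lia. reflexivity. Qed.

Lemma sumn_zero n g : (forall i, (i < n)%nat -> g i = 0) -> sumn n g = 0.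
Proof. intros H. rewrite (sumn_ext n g (fun _ => 0)) by assumption. induction n; simpl; [reflexivity|]. rewrite IHn by (intros; apply H; lia). ring. Qed.

Lemma sumn_add n g h : sumn n (fun i => g i + h i) = sumn n g + sumn n h.
Proof. induction n; simpl; [ring|]. rewrite IHn. ring. Qed.

Lemma sumn_scal n a g : sumn n (fun i => a * g i) = a * sumn n g.
Proof. induction n; simpl; [ring|]. rewrite IHn. ring. Qed.

Lemma sumn_swap n m (G : nat -> nat -> R) :
  sumn n (fun i => sumn m (fun j => G i j)) = sumn m (fun j => sumn n (fun i => G i j)).
Proof.
  induction n; simpl.
  - symmetry. apply sumn_zero. intros; reflexivity.
  - rewrite IHn. rewrite <- sumn_add. reflexivity.
Qed.

Definition sk (k i : nat) : nat := if Nat.ltb i k then i else S i.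

Lemma sk_lt k i m : (k < m)%nat -> (i < m - 1)%nat -> (sk k i < m)%nat.
Proof. unfold sk. intros. destruct (Nat.ltb_spec i k); lia. Qed.

Lemma sk_neq k i : sk k i <> k.
Proof. unfold sk. destruct (Nat.ltb_spec i k); lia. Qed.

Lemma sumn_skip m k g : (k < m)%nat -> sumn m g = g k + sumn (m - 1) (fun i => g (sk k i)).
Proof.
  revert k. induction m as [|m IH]; intros k Hk; [lia|].
  replace (S m - 1)%nat with m by lia. simpl sumn.
  destruct (Nat.eq_dec k m) as [->|Hne].
  - rewrite (sumn_ext m (fun i => g (sk m i)) g). ring.
    intros i Hi. unfold sk. destruct (Nat.ltb_spec i m); [reflexivity|lia].
  - rewrite (IH k) by lia.
    destruct m as [|m']; [lia|].
    replace (S m' - 1)%nat with m' by lia. change (sumn (S m') ?h) with (sumn m' h + h m').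
    cbv beta. replace (sk k m') with (S m'). ring.
    unfold sk. destruct (Nat.ltb_spec m' k); lia.
Qed.

Lemma dep : forall n m (v : nat -> nat -> R), (n < m)%nat ->
  exists c : nat -> R, (exists i, (i < m)%nat /\ c i <> 0) /\
    forall j, (j < n)%nat -> sumn m (fun i => c i * v i j) = 0.
Proof.
  induction n as [|n IH]; intros m v Hnm.
  - exists (fun _ => 1). split. exists O. split; [lia|lra]. intros; lia.
  - destruct (classic (exists k, (k < m)%nat /\ v k n <> 0)) as [[k [Hk Hvk]]|Hno].
    + set (w := fun i j => v (sk k i) j - (v (sk k i) n / v k n) * v k j).
      destruct (IH (m - 1)%nat w) as [c' [[i0 [Hi0 Hc0]] Hc']]; [lia|].
      set (S0 := sumn (m - 1) (fun i => c' i * v (sk k i) n)).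
      set (c := fun i => if Nat.eqb i k then - S0 / v k n
                         else if Nat.ltb i k then c' i else c' (i - 1)%nat).
      assert (Hcs : forall i, c (sk k i) = c' i).
      { intros i. unfold c, sk. destruct (Nat.ltb_spec i k).
        - destruct (Nat.eqb_spec i k); [lia|]. destruct (Nat.ltb_spec i k); [reflexivity|lia].
        - destruct (Nat.eqb_spec (S i) k); [lia|]. destruct (Nat.ltb_spec (S i) k); [lia|].
          f_equal. lia. }
      exists c. split.
      * exists (sk k i0). split. apply sk_lt; lia. rewrite Hcs. exact Hc0.
      * intros j Hj.
        rewrite (sumn_skip m k) by exact Hk.
        rewrite (sumn_ext _ _ (fun i => c' i * v (sk k i) j)) by (intros; rewrite Hcs; reflexivity).
        assert (Hck : c k = - S0 / v k n). { unfold c. rewrite Nat.eqb_refl. reflexivity. }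
        rewrite Hck.
        destruct (Nat.eq_dec j n) as [->|Hjn].
        -- fold S0. field. exact Hvk.
        -- assert (Hw := Hc' j ltac:(lia)). unfold w in Hw.
           rewrite (sumn_ext _ _ (fun i => c' i * v (sk k i) j + (- (v k j / v k n)) * (c' i * v (sk k i) n))) in Hw
             by (intros; field; exact Hvk).
           rewrite sumn_add, sumn_scal in Hw. fold S0 in Hw.
           assert (E : sumn (m - 1) (fun i => c' i * v (sk k i) j) = v k j / v k n * S0) by lra.
           rewrite E. field. exact Hvk.
    + destruct (IH m v) as [c [Hnz Hc]]; [lia|].
      exists c. split; [exact Hnz|]. intros j Hj.
      destruct (Nat.eq_dec j n) as [->|Hjn].
      * apply sumn_zero. intros i Hi.
        destruct (Req_dec (v i n) 0) as [E|E]. rewrite E; ring.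
        exfalso. apply Hno. exists i. split; assumption.
      * apply Hc. lia.
Qed.

Lemma inj_gen n (F : nat -> nat -> R) :
  (forall a : nat -> R, (forall j, (j < n)%nat -> sumn n (fun i => a i * F i j) = 0) ->
     forall i, (i < n)%nat -> a i = 0) ->
  forall Z, (forall i, (i < n)%nat -> sumn n (fun j => F i j * Z j) = 0) ->
  forall j, (j < n)%nat -> Z j = 0.
Proof.
  intros Hind Z HZ p Hp.
  destruct (Req_dec (Z p) 0) as [E|Hzp]; [exact E|exfalso].
  destruct (dep (n - 1) n (fun i j => F i (sk p j))) as [c [[i0 [Hi0 Hc0]] Hc]]; [lia|].
  assert (Hall : forall j, (j < n)%nat -> sumn n (fun i => c i * F i j) = 0).
  { intros j Hj.
    destruct (Nat.eq_dec j p) as [->|Hjp].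
    -
      assert (E1 : sumn n (fun i => c i * sumn n (fun j => F i j * Z j)) = 0).
      { apply sumn_zero. intros i Hi. rewrite HZ by exact Hi. ring. }
      rewrite (sumn_ext n _ (fun i => sumn n (fun j => c i * F i j * Z j))) in E1
        by (intros i _; rewrite <- sumn_scal; apply sumn_ext; intros; ring).
      rewrite sumn_swap in E1.
      rewrite (sumn_skip n p) in E1 by exact Hp.
      rewrite (sumn_zero (n - 1)) in E1.
      + rewrite (sumn_ext n _ (fun i => Z p * (c i * F i p))) in E1 by (intros; ring).
        rewrite sumn_scal in E1.
        apply (Rmult_eq_reg_l (Z p)); [|exact Hzp]. lra.
      + intros j0 Hj0.
        rewrite (sumn_ext n _ (fun i => Z (sk p j0) * (c i * F i (sk p j0)))) by (intros; ring).
        rewrite sumn_scal. rewrite (Hc j0 Hj0). ring.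
    - set (j' := if Nat.ltb j p then j else (j - 1)%nat).
      assert (Hj' : sk p j' = j /\ (j' < n - 1)%nat).
      { unfold j', sk. destruct (Nat.ltb_spec j p).
        - destruct (Nat.ltb_spec j p); [split; lia|lia].
        - destruct (Nat.ltb_spec (j - 1) p); [lia|]. split; lia. }
      destruct Hj' as [Hs Hl]. rewrite <- Hs. apply Hc. exact Hl. }
  apply Hc0. apply (Hind c Hall i0 Hi0).
Qed.


Definition eb (i : nat) : vec := fun j => if Nat.eqb j i then 1 else 0.
Definition A (f : frame) i j k := phi f (eb i) (eb j) (eb k).

Lemma ev1_eb c k : (1 <= k <= 7)%nat -> ev1 c (eb k) = c k.
Proof. intros H. unfold ev1, sum7, eb.
  destruct k as [|[|[|[|[|[|[|[|k]]]]]]]]; try lia; simpl; ring. Qed.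

Definition W0 (u v w : nat -> R) (a b c : nat) :=
  u a * (v b * w c - w b * v c) - v a * (u b * w c - w b * u c) + w a * (u b * v c - v b * u c).
Definition Phi0 u v w := W0 u v w 1 2 7 + W0 u v w 3 4 7 + W0 u v w 5 6 7 + W0 u v w 1 3 5
  - W0 u v w 2 3 6 - W0 u v w 1 4 6 - W0 u v w 2 4 5.

Lemma phi_Phi0 f x y z : phi f x y z =
  Phi0 (fun a => ev1 (f a) x) (fun a => ev1 (f a) y) (fun a => ev1 (f a) z).
Proof. reflexivity. Qed.

Lemma ev1_def c z : ev1 c z = sum7 (fun j => c j * z j).
Proof. reflexivity. Qed.

Lemma Phi0_ext u v w u' v' w' : (forall a, u a = u' a) -> (forall a, v a = v' a) -> (forall a, w a = w' a) ->
  Phi0 u v w = Phi0 u' v' w'.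
Proof. intros Hu Hv Hw. unfold Phi0, W0. rewrite !Hu, !Hv, !Hw. reflexivity. Qed.

Lemma phi_col f x y z : phi f x y z = Phi0 (fun a => sum7 (fun j => f a j * x j))
  (fun a => sum7 (fun j => f a j * y j)) (fun a => sum7 (fun j => f a j * z j)).
Proof. reflexivity. Qed.

Lemma phi_eb3 f x y k : (1 <= k <= 7)%nat -> phi f x y (eb k) =
  Phi0 (fun a => ev1 (f a) x) (fun a => ev1 (f a) y) (fun a => f a k).
Proof. intros Hk. rewrite phi_Phi0. apply Phi0_ext; intros; try reflexivity. apply ev1_eb; exact Hk. Qed.
Lemma phi_eb2 f x z k : (1 <= k <= 7)%nat -> phi f x (eb k) z =
  Phi0 (fun a => ev1 (f a) x) (fun a => f a k) (fun a => ev1 (f a) z).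
Proof. intros Hk. rewrite phi_Phi0. apply Phi0_ext; intros; try reflexivity. apply ev1_eb; exact Hk. Qed.
Lemma phi_eb1 f y z k : (1 <= k <= 7)%nat -> phi f (eb k) y z =
  Phi0 (fun a => f a k) (fun a => ev1 (f a) y) (fun a => ev1 (f a) z).
Proof. intros Hk. rewrite phi_Phi0. apply Phi0_ext; intros; try reflexivity. apply ev1_eb; exact Hk. Qed.

Lemma Phi0_l3 u v (F : nat -> nat -> R) z : Phi0 u v (fun a => sum7 (fun j => F a j * z j)) =
  sum7 (fun k => z k * Phi0 u v (fun a => F a k)).
Proof. unfold Phi0, W0, sum7. ring. Qed.
Lemma Phi0_l2 u w (F : nat -> nat -> R) z : Phi0 u (fun a => sum7 (fun j => F a j * z j)) w =
  sum7 (fun k => z k * Phi0 u (fun a => F a k) w).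
Proof. unfold Phi0, W0, sum7. ring. Qed.
Lemma Phi0_l1 v w (F : nat -> nat -> R) z : Phi0 (fun a => sum7 (fun j => F a j * z j)) v w =
  sum7 (fun k => z k * Phi0 (fun a => F a k) v w).
Proof. unfold Phi0, W0, sum7. ring. Qed.

Lemma phi_lin3 f x y z : phi f x y z = sum7 (fun k => z k * phi f x y (eb k)).
Proof.
  rewrite phi_Phi0. change (fun a => ev1 (f a) z) with (fun a => sum7 (fun j => f a j * z j)).
  rewrite Phi0_l3. unfold sum7 at 1 2. rewrite !phi_eb3 by lia. reflexivity.
Qed.
Lemma phi_lin2 f x y z : phi f x y z = sum7 (fun k => y k * phi f x (eb k) z).
Proof.
  rewrite phi_Phi0. change (fun a => ev1 (f a) y) with (fun a => sum7 (fun j => f a j * y j)).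
  rewrite Phi0_l2. unfold sum7 at 1 2. rewrite !phi_eb2 by lia. reflexivity.
Qed.
Lemma phi_lin1 f x y z : phi f x y z = sum7 (fun k => x k * phi f (eb k) y z).
Proof.
  rewrite phi_Phi0. change (fun a => ev1 (f a) x) with (fun a => sum7 (fun j => f a j * x j)).
  rewrite Phi0_l1. unfold sum7 at 1 2. rewrite !phi_eb1 by lia. reflexivity.
Qed.

Lemma inj7 f Z : is_coframe f -> (forall a, (1 <= a <= 7)%nat -> ev1 (f a) Z = 0) ->
  forall j, (1 <= j <= 7)%nat -> Z j = 0.
Proof.
  intros Hc HZ j Hj.
  replace j with (S (j - 1)) by lia.
  apply (inj_gen 7 (fun i j => f (S i) (S j))) with (Z := fun j => Z (S j)); [| |lia].
  - intros a Ha i Hi.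
    assert (H := Hc (fun i => a (i - 1)%nat)).
    replace (a i) with (a (S i - 1)%nat) by (f_equal; lia).
    apply H; [|lia].
    intros x.
    assert (E : sum7 (fun i => a (i - 1)%nat * ev1 (f i) x) =
       x 1%nat * sumn 7 (fun i => a i * f (S i) 1%nat) + x 2%nat * sumn 7 (fun i => a i * f (S i) 2%nat)
     + x 3%nat * sumn 7 (fun i => a i * f (S i) 3%nat) + x 4%nat * sumn 7 (fun i => a i * f (S i) 4%nat)
     + x 5%nat * sumn 7 (fun i => a i * f (S i) 5%nat) + x 6%nat * sumn 7 (fun i => a i * f (S i) 6%nat)
     + x 7%nat * sumn 7 (fun i => a i * f (S i) 7%nat)).
    { unfold sum7, ev1. simpl. unfold sum7. ring. }
    rewrite E. rewrite (Ha 0%nat), (Ha 1%nat), (Ha 2%nat), (Ha 3%nat), (Ha 4%nat), (Ha 5%nat), (Ha 6%nat) by lia.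
    ring.
  - intros i Hi. assert (H := HZ (S i) ltac:(lia)). unfold ev1, sum7 in H. simpl. lra.
Qed.
Lemma sq21 (a b c d e g h i j k l m n o p q r s t w y: R) :
 a^2+b^2+c^2+d^2+e^2+g^2+h^2+i^2+j^2+k^2+l^2+m^2+n^2+o^2+p^2+q^2+r^2+s^2+t^2+w^2+y^2 = 0 -> a = 0 /\ b = 0 /\ c = 0 /\ d = 0 /\ e = 0 /\ g = 0 /\ h = 0 /\ i = 0 /\ j = 0 /\ k = 0 /\ l = 0 /\ m = 0 /\ n = 0 /\ o = 0 /\ p = 0 /\ q = 0 /\ r = 0 /\ s = 0 /\ t = 0 /\ w = 0 /\ y = 0.
Proof.
  intros H.
  assert (P : forall z, 0 <= z^2) by (intros; nra).
  repeat split; nra.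
Qed.

Lemma Phi0_lin3 u v w : Phi0 u v w = sum7 (fun c => Phi0 u v (eb c) * w c).
Proof. unfold Phi0, W0, sum7, eb; simpl. ring. Qed.

Definition mn (u v : nat -> R) a b := u a * v b - u b * v a.
Lemma lag u v : (Phi0 u v (eb 1))^2 + (Phi0 u v (eb 2))^2 + (Phi0 u v (eb 3))^2 + (Phi0 u v (eb 4))^2
 + (Phi0 u v (eb 5))^2 + (Phi0 u v (eb 6))^2 + (Phi0 u v (eb 7))^2 =
 (mn u v 1 2)^2 + (mn u v 1 3)^2 + (mn u v 1 4)^2 + (mn u v 1 5)^2 + (mn u v 1 6)^2 + (mn u v 1 7)^2
 + (mn u v 2 3)^2 + (mn u v 2 4)^2 + (mn u v 2 5)^2 + (mn u v 2 6)^2 + (mn u v 2 7)^2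
 + (mn u v 3 4)^2 + (mn u v 3 5)^2 + (mn u v 3 6)^2 + (mn u v 3 7)^2
 + (mn u v 4 5)^2 + (mn u v 4 6)^2 + (mn u v 4 7)^2
 + (mn u v 5 6)^2 + (mn u v 5 7)^2 + (mn u v 6 7)^2.
Proof. unfold Phi0, W0, mn, eb; simpl. ring. Qed.

Lemma nondeg f Y : is_coframe f -> (forall Z, phi f (eb 7) Y Z = 0) -> Y 7%nat = 0 ->
  (exists j, (1 <= j <= 6)%nat /\ Y j <> 0) -> False.
Proof.
  intros Hc HZ HY7 [j0 [Hj0 HYj0]].
  set (u := fun a => ev1 (f a) (eb 7)). set (v := fun a => ev1 (f a) Y).
  assert (HP : forall c, (1 <= c <= 7)%nat -> Phi0 u v (eb c) = 0).
  { apply Hc. intros x. rewrite <- (HZ x). rewrite phi_Phi0. fold u v.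
    rewrite (Phi0_lin3 u v). reflexivity. }
  assert (HL := lag u v).
  rewrite !HP in HL by lia.
  assert (HS : (mn u v 1 2)^2 + (mn u v 1 3)^2 + (mn u v 1 4)^2 + (mn u v 1 5)^2 + (mn u v 1 6)^2 + (mn u v 1 7)^2
 + (mn u v 2 3)^2 + (mn u v 2 4)^2 + (mn u v 2 5)^2 + (mn u v 2 6)^2 + (mn u v 2 7)^2
 + (mn u v 3 4)^2 + (mn u v 3 5)^2 + (mn u v 3 6)^2 + (mn u v 3 7)^2
 + (mn u v 4 5)^2 + (mn u v 4 6)^2 + (mn u v 4 7)^2
 + (mn u v 5 6)^2 + (mn u v 5 7)^2 + (mn u v 6 7)^2 = 0) by (rewrite <- HL; ring).
  apply sq21 in HS. unfold mn in HS.
  assert (Hpar : forall a b, (1 <= a <= 7)%nat -> (1 <= b <= 7)%nat -> u a * v b = u b * v a).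
  { intros a b Ha Hb.
    destruct a as [|[|[|[|[|[|[|[|a]]]]]]]]; try lia;
    destruct b as [|[|[|[|[|[|[|[|b]]]]]]]]; try lia; lra. }
  destruct (classic (forall a, (1 <= a <= 7)%nat -> u a = 0)) as [Hu0|Hu].
  - assert (E := inj7 f (eb 7) Hc Hu0 7%nat ltac:(lia)). unfold eb in E. simpl in E. lra.
  - apply not_all_ex_not in Hu. destruct Hu as [p Hp].
    apply imply_to_and in Hp. destruct Hp as [Hp Hup].
    set (Z := fun j => Y j - (v p / u p) * eb 7 j).
    assert (HZ0 : forall a, (1 <= a <= 7)%nat -> ev1 (f a) Z = 0).
    { intros a Ha.
      assert (E : ev1 (f a) Z = v a - (v p / u p) * u a) by (unfold Z, v, u, ev1, sum7; ring).
      rewrite E. assert (Q := Hpar p a Hp Ha).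
      replace (v a - v p / u p * u a) with ((u p * v a - u a * v p) / u p) by (field; exact Hup).
      rewrite Q. unfold Rdiv. ring. }
    assert (E := inj7 f Z Hc HZ0 j0 ltac:(lia)).
    unfold Z, eb in E. destruct (Nat.eqb_spec j0 7); [lia|]. lra.
Qed.

Lemma phi_ebb f i j k : (1 <= i <= 7)%nat -> (1 <= j <= 7)%nat -> (1 <= k <= 7)%nat ->
  phi f (eb i) (eb j) (eb k) = Phi0 (fun a => f a i) (fun a => f a j) (fun a => f a k).
Proof. intros. rewrite phi_Phi0. apply Phi0_ext; intros; apply ev1_eb; assumption. Qed.
Lemma eb_app i j : eb i j = if Nat.eqb j i then 1 else 0.
Proof. reflexivity. Qed.
Ltac convt Lname := unfold dphi;
  repeat match goal with |- context [phi ?f (br ?L ?x ?y) ?z ?w] => rewrite (phi_lin1 f (br L x y) z w) end;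
  unfold sum7; cbv beta iota delta [br ev2 Lname fold_right]; rewrite !eb_app;
  cbv beta iota fix delta [Nat.eqb]; ring_simplify;
  unfold A; rewrite ?phi_ebb by lia; unfold Phi0, W0; ring.
Ltac nzf := match goal with
 | |- ?a * ?b <> 0 => apply Rmult_integral_contrapositive_currified; nzf
 | |- _ => let HH := fresh in intro HH;
     first [ lra | nra | match goal with Hn : _ <> _ |- _ => apply Hn; lra end ]
 end.

Lemma c_147E_1346 l f : dphi (L147E l) f (eb 1) (eb 3) (eb 4) (eb 6) =
  ((1) + (-1) * l) * A f 1 6 7.
Proof. convt L147E. Qed.

Lemma c_147E_1237 l f : dphi (L147E l) f (eb 1) (eb 2) (eb 3) (eb 7) =
  ((-1)) * A f 1 5 7 + ((-1)) * A f 2 6 7 + ((-1)) * A f 3 4 7.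
Proof. convt L147E. Qed.

Lemma c_147E_1256 l f : dphi (L147E l) f (eb 1) (eb 2) (eb 5) (eb 6) =
  ((-1) * l) * A f 1 5 7 + ((1)) * A f 2 6 7 + ((1)) * A f 4 5 6.
Proof. convt L147E. Qed.

Lemma c_147E_1345 l f : dphi (L147E l) f (eb 1) (eb 3) (eb 4) (eb 5) =
  ((1) + (-1) * l) * A f 1 5 7 + ((-1)) * A f 3 4 7 + ((-1)) * A f 4 5 6.
Proof. convt L147E. Qed.

Lemma c_147E_2346 l f : dphi (L147E l) f (eb 2) (eb 3) (eb 4) (eb 6) =
  ((1) + (-1) * l) * A f 2 6 7 + ((1) * l) * A f 3 4 7 + ((-1)) * A f 4 5 6.
Proof. convt L147E. Qed.

Lemma c_147E_1356 l f : dphi (L147E l) f (eb 1) (eb 3) (eb 5) (eb 6) =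
  ((1)) * A f 3 6 7.
Proof. convt L147E. Qed.

Lemma c_147E_1267 l f : dphi (L147E l) f (eb 1) (eb 2) (eb 6) (eb 7) =
  ((1)) * A f 4 6 7.
Proof. convt L147E. Qed.

Lemma c_147E_1357 l f : dphi (L147E l) f (eb 1) (eb 3) (eb 5) (eb 7) =
  ((1)) * A f 5 6 7.
Proof. convt L147E. Qed.

Lemma c_1357M_1247 l f : dphi (L1357M l) f (eb 1) (eb 2) (eb 4) (eb 7) =
  ((-1)) * A f 1 5 7 + ((1)) * A f 2 6 7 + ((1)) * A f 3 4 7.
Proof. convt L1357M. Qed.

Lemma c_1357M_1256 l f : dphi (L1357M l) f (eb 1) (eb 2) (eb 5) (eb 6) =
  ((-1) * l) * A f 1 5 7 + ((-1)) * A f 2 6 7 + ((1)) * A f 3 5 6.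
Proof. convt L1357M. Qed.

Lemma c_1357M_1345 l f : dphi (L1357M l) f (eb 1) (eb 3) (eb 4) (eb 5) =
  ((1) + (-1) * l) * A f 1 5 7 + ((1)) * A f 3 4 7 + ((-1)) * A f 3 5 6.
Proof. convt L1357M. Qed.

Lemma c_1357M_2346 l f : dphi (L1357M l) f (eb 2) (eb 3) (eb 4) (eb 6) =
  ((1) + (-1) * l) * A f 2 6 7 + ((1) * l) * A f 3 4 7 + ((1)) * A f 3 5 6.
Proof. convt L1357M. Qed.

Lemma c_1357M_1237 l f : dphi (L1357M l) f (eb 1) (eb 2) (eb 3) (eb 7) =
  ((1)) * A f 2 5 7.
Proof. convt L1357M. Qed.

Lemma c_1357M_1257 l f : dphi (L1357M l) f (eb 1) (eb 2) (eb 5) (eb 7) =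
  ((1)) * A f 3 5 7.
Proof. convt L1357M. Qed.

Lemma c_1357M_2456 l f : dphi (L1357M l) f (eb 2) (eb 4) (eb 5) (eb 6) =
  ((1) * l) * A f 4 5 7.
Proof. convt L1357M. Qed.

Lemma c_1357M_1367 l f : dphi (L1357M l) f (eb 1) (eb 3) (eb 6) (eb 7) =
  ((1)) * A f 5 6 7.
Proof. convt L1357M. Qed.

Lemma c_1357N_1235 l f : dphi (L1357N l) f (eb 1) (eb 2) (eb 3) (eb 5) =
  ((1) * l) * A f 1 5 7 + ((1)) * A f 2 3 7.
Proof. convt L1357N. Qed.

Lemma c_1357N_1247 l f : dphi (L1357N l) f (eb 1) (eb 2) (eb 4) (eb 7) =
  ((-1)) * A f 1 5 7 + ((1)) * A f 2 6 7 + ((1)) * A f 3 4 7.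
Proof. convt L1357N. Qed.

Lemma c_1357N_1345 l f : dphi (L1357N l) f (eb 1) (eb 3) (eb 4) (eb 5) =
  ((1)) * A f 1 5 7 + ((1)) * A f 3 4 7 + ((-1)) * A f 3 5 6.
Proof. convt L1357N. Qed.

Lemma c_1357N_1456 l f : dphi (L1357N l) f (eb 1) (eb 4) (eb 5) (eb 6) =
  ((-1)) * A f 1 5 7 + ((-1)) * A f 4 6 7.
Proof. convt L1357N. Qed.

Lemma c_1357N_2346 l f : dphi (L1357N l) f (eb 2) (eb 3) (eb 4) (eb 6) =
  ((1)) * A f 2 3 7 + ((1)) * A f 2 6 7 + ((1)) * A f 3 5 6 + ((1) * l) * A f 4 6 7.
Proof. convt L1357N. Qed.

Lemma c_1357N_1237 l f : dphi (L1357N l) f (eb 1) (eb 2) (eb 3) (eb 7) =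
  ((1)) * A f 2 5 7.
Proof. convt L1357N. Qed.

Lemma c_1357N_1257 l f : dphi (L1357N l) f (eb 1) (eb 2) (eb 5) (eb 7) =
  ((1)) * A f 3 5 7.
Proof. convt L1357N. Qed.

Lemma c_1357N_2345 l f : dphi (L1357N l) f (eb 2) (eb 3) (eb 4) (eb 5) =
  ((1)) * A f 2 5 7 + ((1) * l) * A f 4 5 7.
Proof. convt L1357N. Qed.

Lemma c_1357N_1367 l f : dphi (L1357N l) f (eb 1) (eb 3) (eb 6) (eb 7) =
  ((1)) * A f 5 6 7.
Proof. convt L1357N. Qed.

Lemma c_1357N_1267 l f : dphi (L1357N l) f (eb 1) (eb 2) (eb 6) (eb 7) =
  ((1)) * A f 3 6 7.
Proof. convt L1357N. Qed.

Lemma c_1357N_1347 l f : dphi (L1357N l) f (eb 1) (eb 3) (eb 4) (eb 7) =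
  ((1)) * A f 3 6 7 + ((-1)) * A f 4 5 7.
Proof. convt L1357N. Qed.

Lemma c_1357S_1237 l f : dphi (L1357S l) f (eb 1) (eb 2) (eb 3) (eb 7) =
  ((-1)) * A f 1 6 7 + ((1)) * A f 2 5 7.
Proof. convt L1357S. Qed.

Lemma c_1357S_1247 l f : dphi (L1357S l) f (eb 1) (eb 2) (eb 4) (eb 7) =
  ((-1)) * A f 1 6 7 + ((1)) * A f 3 4 7.
Proof. convt L1357S. Qed.

Lemma c_1357S_1256 l f : dphi (L1357S l) f (eb 1) (eb 2) (eb 5) (eb 6) =
  ((-1) * l) * A f 1 5 7 + ((1)) * A f 1 6 7 + ((1)) * A f 2 5 7 + ((-1)) * A f 2 6 7 + ((1)) * A f 3 5 6.
Proof. convt L1357S. Qed.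

Lemma c_1357S_1345 l f : dphi (L1357S l) f (eb 1) (eb 3) (eb 4) (eb 5) =
  ((1)) * A f 1 5 7 + ((1)) * A f 3 4 7.
Proof. convt L1357S. Qed.

Lemma c_1357S_1346 l f : dphi (L1357S l) f (eb 1) (eb 3) (eb 4) (eb 6) =
  ((1)) * A f 1 6 7 + ((1)) * A f 3 4 7 + ((-1)) * A f 4 5 6.
Proof. convt L1357S. Qed.

Lemma c_1357S_2345 l f : dphi (L1357S l) f (eb 2) (eb 3) (eb 4) (eb 5) =
  ((1)) * A f 2 5 7 + ((1)) * A f 3 4 7 + ((-1)) * A f 3 5 6 + ((1)) * A f 4 5 6.
Proof. convt L1357S. Qed.

Lemma c_1357S_2346 l f : dphi (L1357S l) f (eb 2) (eb 3) (eb 4) (eb 6) =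
  ((1)) * A f 2 6 7 + ((1) * l) * A f 3 4 7.
Proof. convt L1357S. Qed.

Lemma c_1357S_1257 l f : dphi (L1357S l) f (eb 1) (eb 2) (eb 5) (eb 7) =
  ((1)) * A f 3 5 7.
Proof. convt L1357S. Qed.

Lemma c_1357S_1347 l f : dphi (L1357S l) f (eb 1) (eb 3) (eb 4) (eb 7) =
  ((-1)) * A f 4 5 7.
Proof. convt L1357S. Qed.

Lemma c_1357S_1367 l f : dphi (L1357S l) f (eb 1) (eb 3) (eb 6) (eb 7) =
  ((1)) * A f 5 6 7.
Proof. convt L1357S. Qed.

Lemma c_12457N_1247 l f : dphi (L12457N l) f (eb 1) (eb 2) (eb 4) (eb 7) =
  ((-1)) * A f 1 6 7 + ((1)) * A f 3 4 7.
Proof. convt L12457N. Qed.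

Lemma c_12457N_1267 l f : dphi (L12457N l) f (eb 1) (eb 2) (eb 6) (eb 7) =
  ((1)) * A f 3 6 7.
Proof. convt L12457N. Qed.

Lemma c_12457N_1346 l f : dphi (L12457N l) f (eb 1) (eb 3) (eb 4) (eb 6) =
  ((1)) * A f 1 6 7 + ((1)) * A f 3 4 7 + ((-1)) * A f 3 6 7.
Proof. convt L12457N. Qed.

Lemma c_12457N_1257 l f : dphi (L12457N l) f (eb 1) (eb 2) (eb 5) (eb 7) =
  ((1)) * A f 2 6 7 + ((1)) * A f 3 5 7.
Proof. convt L12457N. Qed.

Lemma c_12457N_2356 l f : dphi (L12457N l) f (eb 2) (eb 3) (eb 5) (eb 6) =
  ((-1)) * A f 2 6 7 + ((1)) * A f 3 5 7 + ((-1) * l) * A f 3 6 7.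
Proof. convt L12457N. Qed.

Lemma c_12457N_1367 l f : dphi (L12457N l) f (eb 1) (eb 3) (eb 6) (eb 7) =
  ((1)) * A f 4 6 7.
Proof. convt L12457N. Qed.

Lemma c_12457N_2367 l f : dphi (L12457N l) f (eb 2) (eb 3) (eb 6) (eb 7) =
  ((1)) * A f 5 6 7.
Proof. convt L12457N. Qed.

Lemma c_123457I_1247 l f : dphi (L123457I l) f (eb 1) (eb 2) (eb 4) (eb 7) =
  ((-1)) * A f 1 6 7 + ((1)) * A f 2 5 7 + ((1)) * A f 3 4 7.
Proof. convt L123457I. Qed.

Lemma c_123457I_1256 l f : dphi (L123457I l) f (eb 1) (eb 2) (eb 5) (eb 6) =
  ((1) * l) * A f 1 6 7 + ((1)) * A f 2 5 7 + ((1)) * A f 3 5 6.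
Proof. convt L123457I. Qed.

Lemma c_123457I_1346 l f : dphi (L123457I l) f (eb 1) (eb 3) (eb 4) (eb 6) =
  ((1) + (-1) * l) * A f 1 6 7 + ((1)) * A f 3 4 7 + ((1)) * A f 3 5 6.
Proof. convt L123457I. Qed.

Lemma c_123457I_2345 l f : dphi (L123457I l) f (eb 2) (eb 3) (eb 4) (eb 5) =
  ((1) + (-1) * l) * A f 2 5 7 + ((1) * l) * A f 3 4 7 + ((-1)) * A f 3 5 6.
Proof. convt L123457I. Qed.

Lemma c_123457I_1257 l f : dphi (L123457I l) f (eb 1) (eb 2) (eb 5) (eb 7) =
  ((1)) * A f 2 6 7 + ((1)) * A f 3 5 7.
Proof. convt L123457I. Qed.

Lemma c_123457I_1347 l f : dphi (L123457I l) f (eb 1) (eb 3) (eb 4) (eb 7) =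
  ((1)) * A f 3 5 7.
Proof. convt L123457I. Qed.

Lemma c_123457I_1267 l f : dphi (L123457I l) f (eb 1) (eb 2) (eb 6) (eb 7) =
  ((1)) * A f 3 6 7.
Proof. convt L123457I. Qed.

Lemma c_123457I_1367 l f : dphi (L123457I l) f (eb 1) (eb 3) (eb 6) (eb 7) =
  ((1)) * A f 4 6 7.
Proof. convt L123457I. Qed.

Lemma c_123457I_1467 l f : dphi (L123457I l) f (eb 1) (eb 4) (eb 6) (eb 7) =
  ((1)) * A f 5 6 7.
Proof. convt L123457I. Qed.

Lemma c_147E1_1245 l f : dphi (L147E1 l) f (eb 1) (eb 2) (eb 4) (eb 5) =
  ((-1) * l) * A f 1 4 7.
Proof. convt L147E1. Qed.

Lemma c_147E1_1246 l f : dphi (L147E1 l) f (eb 1) (eb 2) (eb 4) (eb 6) =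
  ((-2)) * A f 1 4 7 + ((-1) * l) * A f 2 4 7.
Proof. convt L147E1. Qed.

Lemma c_147E1_1237 l f : dphi (L147E1 l) f (eb 1) (eb 2) (eb 3) (eb 7) =
  ((-1)) * A f 1 5 7 + ((-1)) * A f 2 6 7 + ((-1)) * A f 3 4 7.
Proof. convt L147E1. Qed.

Lemma c_147E1_1256 l f : dphi (L147E1 l) f (eb 1) (eb 2) (eb 5) (eb 6) =
  ((-2)) * A f 1 5 7 + ((1) * l) * A f 1 6 7 + ((-1) * l) * A f 2 5 7 + ((1)) * A f 4 5 6.
Proof. convt L147E1. Qed.

Lemma c_147E1_1346 l f : dphi (L147E1 l) f (eb 1) (eb 3) (eb 4) (eb 6) =
  ((-2)) * A f 1 6 7 + ((-1) * l) * A f 3 4 7.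
Proof. convt L147E1. Qed.

Lemma c_147E1_2345 l f : dphi (L147E1 l) f (eb 2) (eb 3) (eb 4) (eb 5) =
  ((-2)) * A f 2 5 7 + ((1) * l) * A f 3 4 7.
Proof. convt L147E1. Qed.

Lemma c_147E1_2346 l f : dphi (L147E1 l) f (eb 2) (eb 3) (eb 4) (eb 6) =
  ((-2)) * A f 2 6 7 + ((2)) * A f 3 4 7 + ((-1)) * A f 4 5 6.
Proof. convt L147E1. Qed.

Lemma c_147E1_1257 l f : dphi (L147E1 l) f (eb 1) (eb 2) (eb 5) (eb 7) =
  ((1)) * A f 4 5 7.
Proof. convt L147E1. Qed.

Lemma c_147E1_1267 l f : dphi (L147E1 l) f (eb 1) (eb 2) (eb 6) (eb 7) =
  ((1)) * A f 4 6 7.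
Proof. convt L147E1. Qed.

Lemma c_1357QRS1_1247 l f : dphi (L1357QRS1 l) f (eb 1) (eb 2) (eb 4) (eb 7) =
  ((-1)) * A f 1 5 7 + ((1)) * A f 2 6 7 + ((1)) * A f 3 4 7.
Proof. convt L1357QRS1. Qed.

Lemma c_1357QRS1_1256 l f : dphi (L1357QRS1 l) f (eb 1) (eb 2) (eb 5) (eb 6) =
  ((-1) * l) * A f 1 5 7 + ((-1)) * A f 2 6 7 + ((1)) * A f 3 5 6.
Proof. convt L1357QRS1. Qed.

Lemma c_1357QRS1_1345 l f : dphi (L1357QRS1 l) f (eb 1) (eb 3) (eb 4) (eb 5) =
  ((1) + (-1) * l) * A f 1 5 7 + ((1)) * A f 3 4 7 + ((-1)) * A f 3 5 6.
Proof. convt L1357QRS1. Qed.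

Lemma c_1357QRS1_2346 l f : dphi (L1357QRS1 l) f (eb 2) (eb 3) (eb 4) (eb 6) =
  ((1) + (-1) * l) * A f 2 6 7 + ((1) * l) * A f 3 4 7 + ((1)) * A f 3 5 6.
Proof. convt L1357QRS1. Qed.

Lemma c_1357QRS1_1237 l f : dphi (L1357QRS1 l) f (eb 1) (eb 2) (eb 3) (eb 7) =
  ((1)) * A f 1 6 7 + ((1)) * A f 2 5 7.
Proof. convt L1357QRS1. Qed.

Lemma c_1357QRS1_1346 l f : dphi (L1357QRS1 l) f (eb 1) (eb 3) (eb 4) (eb 6) =
  ((1) + (-1) * l) * A f 1 6 7 + ((-1)) * A f 4 5 6.
Proof. convt L1357QRS1. Qed.

Lemma c_1357QRS1_2345 l f : dphi (L1357QRS1 l) f (eb 2) (eb 3) (eb 4) (eb 5) =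
  ((1) + (-1) * l) * A f 2 5 7 + ((-1)) * A f 4 5 6.
Proof. convt L1357QRS1. Qed.

Lemma c_1357QRS1_1257 l f : dphi (L1357QRS1 l) f (eb 1) (eb 2) (eb 5) (eb 7) =
  ((1)) * A f 3 5 7.
Proof. convt L1357QRS1. Qed.

Lemma c_1357QRS1_2456 l f : dphi (L1357QRS1 l) f (eb 2) (eb 4) (eb 5) (eb 6) =
  ((1) * l) * A f 4 5 7.
Proof. convt L1357QRS1. Qed.

Lemma c_1357QRS1_1367 l f : dphi (L1357QRS1 l) f (eb 1) (eb 3) (eb 6) (eb 7) =
  ((1)) * A f 5 6 7.
Proof. convt L1357QRS1. Qed.

Lemma c_12457N2_1257 l f : dphi (L12457N2 l) f (eb 1) (eb 2) (eb 5) (eb 7) =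
  ((1)) * A f 1 6 7 + ((1)) * A f 3 5 7.
Proof. convt L12457N2. Qed.

Lemma c_12457N2_1267 l f : dphi (L12457N2 l) f (eb 1) (eb 2) (eb 6) (eb 7) =
  ((1)) * A f 3 6 7.
Proof. convt L12457N2. Qed.

Lemma c_12457N2_1356 l f : dphi (L12457N2 l) f (eb 1) (eb 3) (eb 5) (eb 6) =
  ((-1)) * A f 1 6 7 + ((1)) * A f 3 5 7 + ((-1)) * A f 3 6 7 + ((1)) * A f 4 5 6.
Proof. convt L12457N2. Qed.

Lemma c_12457N2_2346 l f : dphi (L12457N2 l) f (eb 2) (eb 3) (eb 4) (eb 6) =
  ((-1)) * A f 3 6 7 + ((-1)) * A f 4 5 6.
Proof. convt L12457N2. Qed.

Lemma c_12457N2_1247 l f : dphi (L12457N2 l) f (eb 1) (eb 2) (eb 4) (eb 7) =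
  ((-1)) * A f 2 6 7 + ((1)) * A f 3 4 7.
Proof. convt L12457N2. Qed.

Lemma c_12457N2_1346 l f : dphi (L12457N2 l) f (eb 1) (eb 3) (eb 4) (eb 6) =
  ((1)) * A f 3 4 7.
Proof. convt L12457N2. Qed.

Lemma c_12457N2_1367 l f : dphi (L12457N2 l) f (eb 1) (eb 3) (eb 6) (eb 7) =
  ((1)) * A f 4 6 7.
Proof. convt L12457N2. Qed.

Lemma c_12457N2_1457 l f : dphi (L12457N2 l) f (eb 1) (eb 4) (eb 5) (eb 7) =
  ((1)) * A f 5 6 7.
Proof. convt L12457N2. Qed.

Lemma no_147E l f : l <> 0 -> l <> 1 -> calibrated (L147E l) f -> False.
Proof.
  intros Hh0 Hh1 [Hc Hd].
  assert (T167 : A f 1 6 7 = 0).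
  { assert (HT : (l - 1) * A f 1 6 7 = ((-1)) * dphi (L147E l) f (eb 1) (eb 3) (eb 4) (eb 6)) by (rewrite c_147E_1346; field).
    rewrite !Hd in HT. apply (Rmult_eq_reg_l ((l - 1))); [rewrite HT; field | nzf]. }
  assert (T267 : A f 2 6 7 = 0).
  { assert (HT : (l * l - l + 1) * A f 2 6 7 = ((-1/2) * l * l) * dphi (L147E l) f (eb 1) (eb 2) (eb 3) (eb 7) + ((1/2)) * dphi (L147E l) f (eb 1) (eb 2) (eb 5) (eb 6) + ((1/2) * l) * dphi (L147E l) f (eb 1) (eb 3) (eb 4) (eb 5) + ((1/2) + (-1/2) * l) * dphi (L147E l) f (eb 2) (eb 3) (eb 4) (eb 6)) by (rewrite c_147E_1237, c_147E_1256, c_147E_1345, c_147E_2346; field).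
    rewrite !Hd in HT. apply (Rmult_eq_reg_l ((l * l - l + 1))); [rewrite HT; field | nzf]. }
  assert (T367 : A f 3 6 7 = 0).
  { assert (HT : 1 * A f 3 6 7 = ((1)) * dphi (L147E l) f (eb 1) (eb 3) (eb 5) (eb 6)) by (rewrite c_147E_1356; field).
    rewrite !Hd in HT. apply (Rmult_eq_reg_l (1)); [rewrite HT; field | nzf]. }
  assert (T467 : A f 4 6 7 = 0).
  { assert (HT : 1 * A f 4 6 7 = ((1)) * dphi (L147E l) f (eb 1) (eb 2) (eb 6) (eb 7)) by (rewrite c_147E_1267; field).
    rewrite !Hd in HT. apply (Rmult_eq_reg_l (1)); [rewrite HT; field | nzf]. }
  assert (T567 : A f 5 6 7 = 0).
  { assert (HT : 1 * A f 5 6 7 = ((1)) * dphi (L147E l) f (eb 1) (eb 3) (eb 5) (eb 7)) by (rewrite c_147E_1357; field).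
    rewrite !Hd in HT. apply (Rmult_eq_reg_l (1)); [rewrite HT; field | nzf]. }
  apply (nondeg f (eb 6) Hc).
  - intro Z. rewrite phi_lin3. unfold sum7.
    replace (phi f (eb 7) (eb 6) (eb 1)) with (-1 * A f 1 6 7) by (unfold A; rewrite !phi_ebb by lia; unfold Phi0, W0; ring). rewrite T167.
    replace (phi f (eb 7) (eb 6) (eb 2)) with (-1 * A f 2 6 7) by (unfold A; rewrite !phi_ebb by lia; unfold Phi0, W0; ring). rewrite T267.
    replace (phi f (eb 7) (eb 6) (eb 3)) with (-1 * A f 3 6 7) by (unfold A; rewrite !phi_ebb by lia; unfold Phi0, W0; ring). rewrite T367.
    replace (phi f (eb 7) (eb 6) (eb 4)) with (-1 * A f 4 6 7) by (unfold A; rewrite !phi_ebb by lia; unfold Phi0, W0; ring). rewrite T467.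
    replace (phi f (eb 7) (eb 6) (eb 5)) with (-1 * A f 5 6 7) by (unfold A; rewrite !phi_ebb by lia; unfold Phi0, W0; ring). rewrite T567.
    replace (phi f (eb 7) (eb 6) (eb 6)) with 0 by (rewrite !phi_ebb by lia; unfold Phi0, W0; ring).
    replace (phi f (eb 7) (eb 6) (eb 7)) with 0 by (rewrite !phi_ebb by lia; unfold Phi0, W0; ring).
    ring.
  - reflexivity.
  - exists 6%nat. split; [lia | unfold eb; simpl; lra].
Qed.

Lemma no_1357M l f : l <> 0 -> calibrated (L1357M l) f -> False.
Proof.
  intros Hh0 [Hc Hd].
  assert (T157 : A f 1 5 7 = 0).
  { assert (HT : (l * l - l + 1) * A f 1 5 7 = ((-1/2)) * dphi (L1357M l) f (eb 1) (eb 2) (eb 4) (eb 7) + ((-1/2) * l) * dphi (L1357M l) f (eb 1) (eb 2) (eb 5) (eb 6) + ((1/2) + (-1/2) * l) * dphi (L1357M l) f (eb 1) (eb 3) (eb 4) (eb 5) + ((1/2)) * dphi (L1357M l) f (eb 2) (eb 3) (eb 4) (eb 6)) by (rewrite c_1357M_1247, c_1357M_1256, c_1357M_1345, c_1357M_2346; field).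
    rewrite !Hd in HT. apply (Rmult_eq_reg_l ((l * l - l + 1))); [rewrite HT; field | nzf]. }
  assert (T257 : A f 2 5 7 = 0).
  { assert (HT : 1 * A f 2 5 7 = ((1)) * dphi (L1357M l) f (eb 1) (eb 2) (eb 3) (eb 7)) by (rewrite c_1357M_1237; field).
    rewrite !Hd in HT. apply (Rmult_eq_reg_l (1)); [rewrite HT; field | nzf]. }
  assert (T357 : A f 3 5 7 = 0).
  { assert (HT : 1 * A f 3 5 7 = ((1)) * dphi (L1357M l) f (eb 1) (eb 2) (eb 5) (eb 7)) by (rewrite c_1357M_1257; field).
    rewrite !Hd in HT. apply (Rmult_eq_reg_l (1)); [rewrite HT; field | nzf]. }
  assert (T457 : A f 4 5 7 = 0).
  { assert (HT : l * A f 4 5 7 = ((1)) * dphi (L1357M l) f (eb 2) (eb 4) (eb 5) (eb 6)) by (rewrite c_1357M_2456; field).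
    rewrite !Hd in HT. apply (Rmult_eq_reg_l (l)); [rewrite HT; field | nzf]. }
  assert (T567 : A f 5 6 7 = 0).
  { assert (HT : 1 * A f 5 6 7 = ((1)) * dphi (L1357M l) f (eb 1) (eb 3) (eb 6) (eb 7)) by (rewrite c_1357M_1367; field).
    rewrite !Hd in HT. apply (Rmult_eq_reg_l (1)); [rewrite HT; field | nzf]. }
  apply (nondeg f (eb 5) Hc).
  - intro Z. rewrite phi_lin3. unfold sum7.
    replace (phi f (eb 7) (eb 5) (eb 1)) with (-1 * A f 1 5 7) by (unfold A; rewrite !phi_ebb by lia; unfold Phi0, W0; ring). rewrite T157.
    replace (phi f (eb 7) (eb 5) (eb 2)) with (-1 * A f 2 5 7) by (unfold A; rewrite !phi_ebb by lia; unfold Phi0, W0; ring). rewrite T257.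
    replace (phi f (eb 7) (eb 5) (eb 3)) with (-1 * A f 3 5 7) by (unfold A; rewrite !phi_ebb by lia; unfold Phi0, W0; ring). rewrite T357.
    replace (phi f (eb 7) (eb 5) (eb 4)) with (-1 * A f 4 5 7) by (unfold A; rewrite !phi_ebb by lia; unfold Phi0, W0; ring). rewrite T457.
    replace (phi f (eb 7) (eb 5) (eb 5)) with 0 by (rewrite !phi_ebb by lia; unfold Phi0, W0; ring).
    replace (phi f (eb 7) (eb 5) (eb 6)) with (1 * A f 5 6 7) by (unfold A; rewrite !phi_ebb by lia; unfold Phi0, W0; ring). rewrite T567.
    replace (phi f (eb 7) (eb 5) (eb 7)) with 0 by (rewrite !phi_ebb by lia; unfold Phi0, W0; ring).
    ring.
  - reflexivity.
  - exists 5%nat. split; [lia | unfold eb; simpl; lra].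
Qed.

Lemma no_1357N l f : l <> 0 -> l <> 1 -> calibrated (L1357N l) f -> False.
Proof.
  intros Hh0 Hh1 [Hc Hd].
  assert (T157 : A f 1 5 7 = 0).
  { assert (HT : (l - 1) * A f 1 5 7 = ((1/2)) * dphi (L1357N l) f (eb 1) (eb 2) (eb 3) (eb 5) + ((1/2)) * dphi (L1357N l) f (eb 1) (eb 2) (eb 4) (eb 7) + ((-1/2)) * dphi (L1357N l) f (eb 1) (eb 3) (eb 4) (eb 5) + ((-1/2) * l) * dphi (L1357N l) f (eb 1) (eb 4) (eb 5) (eb 6) + ((-1/2)) * dphi (L1357N l) f (eb 2) (eb 3) (eb 4) (eb 6)) by (rewrite c_1357N_1235, c_1357N_1247, c_1357N_1345, c_1357N_1456, c_1357N_2346; field).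
    rewrite !Hd in HT. apply (Rmult_eq_reg_l ((l - 1))); [rewrite HT; field | nzf]. }
  assert (T257 : A f 2 5 7 = 0).
  { assert (HT : 1 * A f 2 5 7 = ((1)) * dphi (L1357N l) f (eb 1) (eb 2) (eb 3) (eb 7)) by (rewrite c_1357N_1237; field).
    rewrite !Hd in HT. apply (Rmult_eq_reg_l (1)); [rewrite HT; field | nzf]. }
  assert (T357 : A f 3 5 7 = 0).
  { assert (HT : 1 * A f 3 5 7 = ((1)) * dphi (L1357N l) f (eb 1) (eb 2) (eb 5) (eb 7)) by (rewrite c_1357N_1257; field).
    rewrite !Hd in HT. apply (Rmult_eq_reg_l (1)); [rewrite HT; field | nzf]. }
  assert (T457 : A f 4 5 7 = 0).
  { assert (HT : l * A f 4 5 7 = ((-1)) * dphi (L1357N l) f (eb 1) (eb 2) (eb 3) (eb 7) + ((1)) * dphi (L1357N l) f (eb 2) (eb 3) (eb 4) (eb 5)) by (rewrite c_1357N_1237, c_1357N_2345; field).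
    rewrite !Hd in HT. apply (Rmult_eq_reg_l (l)); [rewrite HT; field | nzf]. }
  assert (T567 : A f 5 6 7 = 0).
  { assert (HT : 1 * A f 5 6 7 = ((1)) * dphi (L1357N l) f (eb 1) (eb 3) (eb 6) (eb 7)) by (rewrite c_1357N_1367; field).
    rewrite !Hd in HT. apply (Rmult_eq_reg_l (1)); [rewrite HT; field | nzf]. }
  apply (nondeg f (eb 5) Hc).
  - intro Z. rewrite phi_lin3. unfold sum7.
    replace (phi f (eb 7) (eb 5) (eb 1)) with (-1 * A f 1 5 7) by (unfold A; rewrite !phi_ebb by lia; unfold Phi0, W0; ring). rewrite T157.
    replace (phi f (eb 7) (eb 5) (eb 2)) with (-1 * A f 2 5 7) by (unfold A; rewrite !phi_ebb by lia; unfold Phi0, W0; ring). rewrite T257.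
    replace (phi f (eb 7) (eb 5) (eb 3)) with (-1 * A f 3 5 7) by (unfold A; rewrite !phi_ebb by lia; unfold Phi0, W0; ring). rewrite T357.
    replace (phi f (eb 7) (eb 5) (eb 4)) with (-1 * A f 4 5 7) by (unfold A; rewrite !phi_ebb by lia; unfold Phi0, W0; ring). rewrite T457.
    replace (phi f (eb 7) (eb 5) (eb 5)) with 0 by (rewrite !phi_ebb by lia; unfold Phi0, W0; ring).
    replace (phi f (eb 7) (eb 5) (eb 6)) with (1 * A f 5 6 7) by (unfold A; rewrite !phi_ebb by lia; unfold Phi0, W0; ring). rewrite T567.
    replace (phi f (eb 7) (eb 5) (eb 7)) with 0 by (rewrite !phi_ebb by lia; unfold Phi0, W0; ring).
    ring.
  - reflexivity.
  - exists 5%nat. split; [lia | unfold eb; simpl; lra].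
Qed.

Lemma no_1357N_0 f : calibrated (L1357N (0)) f -> False.
Proof.
  intros [Hc Hd].
  assert (T157 : A f 1 5 7 = 0).
  { assert (HT : 1 * A f 1 5 7 = ((-1/2)) * dphi (L1357N ((0))) f (eb 1) (eb 2) (eb 3) (eb 5) + ((-1/2)) * dphi (L1357N ((0))) f (eb 1) (eb 2) (eb 4) (eb 7) + ((1/2)) * dphi (L1357N ((0))) f (eb 1) (eb 3) (eb 4) (eb 5) + ((1/2)) * dphi (L1357N ((0))) f (eb 2) (eb 3) (eb 4) (eb 6)) by (rewrite c_1357N_1235, c_1357N_1247, c_1357N_1345, c_1357N_2346; field).
    rewrite !Hd in HT. apply (Rmult_eq_reg_l (1)); [rewrite HT; field | nzf]. }
  assert (T257 : A f 2 5 7 = 0).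
  { assert (HT : 1 * A f 2 5 7 = ((1)) * dphi (L1357N ((0))) f (eb 1) (eb 2) (eb 3) (eb 7)) by (rewrite c_1357N_1237; field).
    rewrite !Hd in HT. apply (Rmult_eq_reg_l (1)); [rewrite HT; field | nzf]. }
  assert (T357 : A f 3 5 7 = 0).
  { assert (HT : 1 * A f 3 5 7 = ((1)) * dphi (L1357N ((0))) f (eb 1) (eb 2) (eb 5) (eb 7)) by (rewrite c_1357N_1257; field).
    rewrite !Hd in HT. apply (Rmult_eq_reg_l (1)); [rewrite HT; field | nzf]. }
  assert (T457 : A f 4 5 7 = 0).
  { assert (HT : 1 * A f 4 5 7 = ((1)) * dphi (L1357N ((0))) f (eb 1) (eb 2) (eb 6) (eb 7) + ((-1)) * dphi (L1357N ((0))) f (eb 1) (eb 3) (eb 4) (eb 7)) by (rewrite c_1357N_1267, c_1357N_1347; field).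
    rewrite !Hd in HT. apply (Rmult_eq_reg_l (1)); [rewrite HT; field | nzf]. }
  assert (T567 : A f 5 6 7 = 0).
  { assert (HT : 1 * A f 5 6 7 = ((1)) * dphi (L1357N ((0))) f (eb 1) (eb 3) (eb 6) (eb 7)) by (rewrite c_1357N_1367; field).
    rewrite !Hd in HT. apply (Rmult_eq_reg_l (1)); [rewrite HT; field | nzf]. }
  apply (nondeg f (eb 5) Hc).
  - intro Z. rewrite phi_lin3. unfold sum7.
    replace (phi f (eb 7) (eb 5) (eb 1)) with (-1 * A f 1 5 7) by (unfold A; rewrite !phi_ebb by lia; unfold Phi0, W0; ring). rewrite T157.
    replace (phi f (eb 7) (eb 5) (eb 2)) with (-1 * A f 2 5 7) by (unfold A; rewrite !phi_ebb by lia; unfold Phi0, W0; ring). rewrite T257.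
    replace (phi f (eb 7) (eb 5) (eb 3)) with (-1 * A f 3 5 7) by (unfold A; rewrite !phi_ebb by lia; unfold Phi0, W0; ring). rewrite T357.
    replace (phi f (eb 7) (eb 5) (eb 4)) with (-1 * A f 4 5 7) by (unfold A; rewrite !phi_ebb by lia; unfold Phi0, W0; ring). rewrite T457.
    replace (phi f (eb 7) (eb 5) (eb 5)) with 0 by (rewrite !phi_ebb by lia; unfold Phi0, W0; ring).
    replace (phi f (eb 7) (eb 5) (eb 6)) with (1 * A f 5 6 7) by (unfold A; rewrite !phi_ebb by lia; unfold Phi0, W0; ring). rewrite T567.
    replace (phi f (eb 7) (eb 5) (eb 7)) with 0 by (rewrite !phi_ebb by lia; unfold Phi0, W0; ring).
    ring.
  - reflexivity.
  - exists 5%nat. split; [lia | unfold eb; simpl; lra].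
Qed.

Lemma no_1357S l f : l <> -3 -> calibrated (L1357S l) f -> False.
Proof.
  intros Hh0 [Hc Hd].
  assert (T157 : A f 1 5 7 = 0).
  { assert (HT : (l + 3) * A f 1 5 7 = ((1)) * dphi (L1357S l) f (eb 1) (eb 2) (eb 3) (eb 7) + ((-2)) * dphi (L1357S l) f (eb 1) (eb 2) (eb 4) (eb 7) + ((-1/2)) * dphi (L1357S l) f (eb 1) (eb 2) (eb 5) (eb 6) + ((3) + (1/2) * l) * dphi (L1357S l) f (eb 1) (eb 3) (eb 4) (eb 5) + ((-1/2)) * dphi (L1357S l) f (eb 1) (eb 3) (eb 4) (eb 6) + ((-1/2)) * dphi (L1357S l) f (eb 2) (eb 3) (eb 4) (eb 5) + ((-1/2)) * dphi (L1357S l) f (eb 2) (eb 3) (eb 4) (eb 6)) by (rewrite c_1357S_1237, c_1357S_1247, c_1357S_1256, c_1357S_1345, c_1357S_1346, c_1357S_2345, c_1357S_2346; field).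
    rewrite !Hd in HT. apply (Rmult_eq_reg_l ((l + 3))); [rewrite HT; field | nzf]. }
  assert (T257 : A f 2 5 7 = 0).
  { assert (HT : (l + 3) * A f 2 5 7 = ((2) + (1) * l) * dphi (L1357S l) f (eb 1) (eb 2) (eb 3) (eb 7) + ((-1) + (-1) * l) * dphi (L1357S l) f (eb 1) (eb 2) (eb 4) (eb 7) + ((1/2)) * dphi (L1357S l) f (eb 1) (eb 2) (eb 5) (eb 6) + ((1/2) * l) * dphi (L1357S l) f (eb 1) (eb 3) (eb 4) (eb 5) + ((1/2)) * dphi (L1357S l) f (eb 1) (eb 3) (eb 4) (eb 6) + ((1/2)) * dphi (L1357S l) f (eb 2) (eb 3) (eb 4) (eb 5) + ((1/2)) * dphi (L1357S l) f (eb 2) (eb 3) (eb 4) (eb 6)) by (rewrite c_1357S_1237, c_1357S_1247, c_1357S_1256, c_1357S_1345, c_1357S_1346, c_1357S_2345, c_1357S_2346; field).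
    rewrite !Hd in HT. apply (Rmult_eq_reg_l ((l + 3))); [rewrite HT; field | nzf]. }
  assert (T357 : A f 3 5 7 = 0).
  { assert (HT : 1 * A f 3 5 7 = ((1)) * dphi (L1357S l) f (eb 1) (eb 2) (eb 5) (eb 7)) by (rewrite c_1357S_1257; field).
    rewrite !Hd in HT. apply (Rmult_eq_reg_l (1)); [rewrite HT; field | nzf]. }
  assert (T457 : A f 4 5 7 = 0).
  { assert (HT : 1 * A f 4 5 7 = ((-1)) * dphi (L1357S l) f (eb 1) (eb 3) (eb 4) (eb 7)) by (rewrite c_1357S_1347; field).
    rewrite !Hd in HT. apply (Rmult_eq_reg_l (1)); [rewrite HT; field | nzf]. }
  assert (T567 : A f 5 6 7 = 0).
  { assert (HT : 1 * A f 5 6 7 = ((1)) * dphi (L1357S l) f (eb 1) (eb 3) (eb 6) (eb 7)) by (rewrite c_1357S_1367; field).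
    rewrite !Hd in HT. apply (Rmult_eq_reg_l (1)); [rewrite HT; field | nzf]. }
  apply (nondeg f (eb 5) Hc).
  - intro Z. rewrite phi_lin3. unfold sum7.
    replace (phi f (eb 7) (eb 5) (eb 1)) with (-1 * A f 1 5 7) by (unfold A; rewrite !phi_ebb by lia; unfold Phi0, W0; ring). rewrite T157.
    replace (phi f (eb 7) (eb 5) (eb 2)) with (-1 * A f 2 5 7) by (unfold A; rewrite !phi_ebb by lia; unfold Phi0, W0; ring). rewrite T257.
    replace (phi f (eb 7) (eb 5) (eb 3)) with (-1 * A f 3 5 7) by (unfold A; rewrite !phi_ebb by lia; unfold Phi0, W0; ring). rewrite T357.
    replace (phi f (eb 7) (eb 5) (eb 4)) with (-1 * A f 4 5 7) by (unfold A; rewrite !phi_ebb by lia; unfold Phi0, W0; ring). rewrite T457.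
    replace (phi f (eb 7) (eb 5) (eb 5)) with 0 by (rewrite !phi_ebb by lia; unfold Phi0, W0; ring).
    replace (phi f (eb 7) (eb 5) (eb 6)) with (1 * A f 5 6 7) by (unfold A; rewrite !phi_ebb by lia; unfold Phi0, W0; ring). rewrite T567.
    replace (phi f (eb 7) (eb 5) (eb 7)) with 0 by (rewrite !phi_ebb by lia; unfold Phi0, W0; ring).
    ring.
  - reflexivity.
  - exists 5%nat. split; [lia | unfold eb; simpl; lra].
Qed.

Lemma no_12457N l f : calibrated (L12457N l) f -> False.
Proof.
  intros  [Hc Hd].
  assert (T167 : A f 1 6 7 = 0).
  { assert (HT : 1 * A f 1 6 7 = ((-1/2)) * dphi (L12457N l) f (eb 1) (eb 2) (eb 4) (eb 7) + ((1/2)) * dphi (L12457N l) f (eb 1) (eb 2) (eb 6) (eb 7) + ((1/2)) * dphi (L12457N l) f (eb 1) (eb 3) (eb 4) (eb 6)) by (rewrite c_12457N_1247, c_12457N_1267, c_12457N_1346; field).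
    rewrite !Hd in HT. apply (Rmult_eq_reg_l (1)); [rewrite HT; field | nzf]. }
  assert (T267 : A f 2 6 7 = 0).
  { assert (HT : 1 * A f 2 6 7 = ((1/2)) * dphi (L12457N l) f (eb 1) (eb 2) (eb 5) (eb 7) + ((-1/2) * l) * dphi (L12457N l) f (eb 1) (eb 2) (eb 6) (eb 7) + ((-1/2)) * dphi (L12457N l) f (eb 2) (eb 3) (eb 5) (eb 6)) by (rewrite c_12457N_1257, c_12457N_1267, c_12457N_2356; field).
    rewrite !Hd in HT. apply (Rmult_eq_reg_l (1)); [rewrite HT; field | nzf]. }
  assert (T367 : A f 3 6 7 = 0).
  { assert (HT : 1 * A f 3 6 7 = ((1)) * dphi (L12457N l) f (eb 1) (eb 2) (eb 6) (eb 7)) by (rewrite c_12457N_1267; field).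
    rewrite !Hd in HT. apply (Rmult_eq_reg_l (1)); [rewrite HT; field | nzf]. }
  assert (T467 : A f 4 6 7 = 0).
  { assert (HT : 1 * A f 4 6 7 = ((1)) * dphi (L12457N l) f (eb 1) (eb 3) (eb 6) (eb 7)) by (rewrite c_12457N_1367; field).
    rewrite !Hd in HT. apply (Rmult_eq_reg_l (1)); [rewrite HT; field | nzf]. }
  assert (T567 : A f 5 6 7 = 0).
  { assert (HT : 1 * A f 5 6 7 = ((1)) * dphi (L12457N l) f (eb 2) (eb 3) (eb 6) (eb 7)) by (rewrite c_12457N_2367; field).
    rewrite !Hd in HT. apply (Rmult_eq_reg_l (1)); [rewrite HT; field | nzf]. }
  apply (nondeg f (eb 6) Hc).
  - intro Z. rewrite phi_lin3. unfold sum7.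
    replace (phi f (eb 7) (eb 6) (eb 1)) with (-1 * A f 1 6 7) by (unfold A; rewrite !phi_ebb by lia; unfold Phi0, W0; ring). rewrite T167.
    replace (phi f (eb 7) (eb 6) (eb 2)) with (-1 * A f 2 6 7) by (unfold A; rewrite !phi_ebb by lia; unfold Phi0, W0; ring). rewrite T267.
    replace (phi f (eb 7) (eb 6) (eb 3)) with (-1 * A f 3 6 7) by (unfold A; rewrite !phi_ebb by lia; unfold Phi0, W0; ring). rewrite T367.
    replace (phi f (eb 7) (eb 6) (eb 4)) with (-1 * A f 4 6 7) by (unfold A; rewrite !phi_ebb by lia; unfold Phi0, W0; ring). rewrite T467.
    replace (phi f (eb 7) (eb 6) (eb 5)) with (-1 * A f 5 6 7) by (unfold A; rewrite !phi_ebb by lia; unfold Phi0, W0; ring). rewrite T567.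
    replace (phi f (eb 7) (eb 6) (eb 6)) with 0 by (rewrite !phi_ebb by lia; unfold Phi0, W0; ring).
    replace (phi f (eb 7) (eb 6) (eb 7)) with 0 by (rewrite !phi_ebb by lia; unfold Phi0, W0; ring).
    ring.
  - reflexivity.
  - exists 6%nat. split; [lia | unfold eb; simpl; lra].
Qed.

Lemma no_123457I l f : calibrated (L123457I l) f -> False.
Proof.
  intros  [Hc Hd].
  assert (T167 : A f 1 6 7 = 0).
  { assert (HT : (l * l - l + 1) * A f 1 6 7 = ((-1/2)) * dphi (L123457I l) f (eb 1) (eb 2) (eb 4) (eb 7) + ((1/2) * l) * dphi (L123457I l) f (eb 1) (eb 2) (eb 5) (eb 6) + ((1/2) + (-1/2) * l) * dphi (L123457I l) f (eb 1) (eb 3) (eb 4) (eb 6) + ((1/2)) * dphi (L123457I l) f (eb 2) (eb 3) (eb 4) (eb 5)) by (rewrite c_123457I_1247, c_123457I_1256, c_123457I_1346, c_123457I_2345; field).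
    rewrite !Hd in HT. apply (Rmult_eq_reg_l ((l * l - l + 1))); [rewrite HT; field | nzf]. }
  assert (T267 : A f 2 6 7 = 0).
  { assert (HT : 1 * A f 2 6 7 = ((1)) * dphi (L123457I l) f (eb 1) (eb 2) (eb 5) (eb 7) + ((-1)) * dphi (L123457I l) f (eb 1) (eb 3) (eb 4) (eb 7)) by (rewrite c_123457I_1257, c_123457I_1347; field).
    rewrite !Hd in HT. apply (Rmult_eq_reg_l (1)); [rewrite HT; field | nzf]. }
  assert (T367 : A f 3 6 7 = 0).
  { assert (HT : 1 * A f 3 6 7 = ((1)) * dphi (L123457I l) f (eb 1) (eb 2) (eb 6) (eb 7)) by (rewrite c_123457I_1267; field).
    rewrite !Hd in HT. apply (Rmult_eq_reg_l (1)); [rewrite HT; field | nzf]. }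
  assert (T467 : A f 4 6 7 = 0).
  { assert (HT : 1 * A f 4 6 7 = ((1)) * dphi (L123457I l) f (eb 1) (eb 3) (eb 6) (eb 7)) by (rewrite c_123457I_1367; field).
    rewrite !Hd in HT. apply (Rmult_eq_reg_l (1)); [rewrite HT; field | nzf]. }
  assert (T567 : A f 5 6 7 = 0).
  { assert (HT : 1 * A f 5 6 7 = ((1)) * dphi (L123457I l) f (eb 1) (eb 4) (eb 6) (eb 7)) by (rewrite c_123457I_1467; field).
    rewrite !Hd in HT. apply (Rmult_eq_reg_l (1)); [rewrite HT; field | nzf]. }
  apply (nondeg f (eb 6) Hc).
  - intro Z. rewrite phi_lin3. unfold sum7.
    replace (phi f (eb 7) (eb 6) (eb 1)) with (-1 * A f 1 6 7) by (unfold A; rewrite !phi_ebb by lia; unfold Phi0, W0; ring). rewrite T167.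
    replace (phi f (eb 7) (eb 6) (eb 2)) with (-1 * A f 2 6 7) by (unfold A; rewrite !phi_ebb by lia; unfold Phi0, W0; ring). rewrite T267.
    replace (phi f (eb 7) (eb 6) (eb 3)) with (-1 * A f 3 6 7) by (unfold A; rewrite !phi_ebb by lia; unfold Phi0, W0; ring). rewrite T367.
    replace (phi f (eb 7) (eb 6) (eb 4)) with (-1 * A f 4 6 7) by (unfold A; rewrite !phi_ebb by lia; unfold Phi0, W0; ring). rewrite T467.
    replace (phi f (eb 7) (eb 6) (eb 5)) with (-1 * A f 5 6 7) by (unfold A; rewrite !phi_ebb by lia; unfold Phi0, W0; ring). rewrite T567.
    replace (phi f (eb 7) (eb 6) (eb 6)) with 0 by (rewrite !phi_ebb by lia; unfold Phi0, W0; ring).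
    replace (phi f (eb 7) (eb 6) (eb 7)) with 0 by (rewrite !phi_ebb by lia; unfold Phi0, W0; ring).
    ring.
  - reflexivity.
  - exists 6%nat. split; [lia | unfold eb; simpl; lra].
Qed.

Lemma no_147E1 l f : l > 1 -> l <> 2 -> calibrated (L147E1 l) f -> False.
Proof.
  intros Hh0 Hh1 [Hc Hd].
  assert (T147 : A f 1 4 7 = 0).
  { assert (HT : l * A f 1 4 7 = ((-1)) * dphi (L147E1 l) f (eb 1) (eb 2) (eb 4) (eb 5)) by (rewrite c_147E1_1245; field).
    rewrite !Hd in HT. apply (Rmult_eq_reg_l (l)); [rewrite HT; field | nzf]. }
  assert (T247 : A f 2 4 7 = 0).
  { assert (HT : l * l * A f 2 4 7 = ((2)) * dphi (L147E1 l) f (eb 1) (eb 2) (eb 4) (eb 5) + ((-1) * l) * dphi (L147E1 l) f (eb 1) (eb 2) (eb 4) (eb 6)) by (rewrite c_147E1_1245, c_147E1_1246; field).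
    rewrite !Hd in HT. apply (Rmult_eq_reg_l (l * l)); [rewrite HT; field | nzf]. }
  assert (T347 : A f 3 4 7 = 0).
  { assert (HT : (l - 2) * (l + 2) * A f 3 4 7 = ((2)) * dphi (L147E1 l) f (eb 1) (eb 2) (eb 3) (eb 7) + ((-1)) * dphi (L147E1 l) f (eb 1) (eb 2) (eb 5) (eb 6) + ((-1/2) * l) * dphi (L147E1 l) f (eb 1) (eb 3) (eb 4) (eb 6) + ((1/2) * l) * dphi (L147E1 l) f (eb 2) (eb 3) (eb 4) (eb 5) + ((-1)) * dphi (L147E1 l) f (eb 2) (eb 3) (eb 4) (eb 6)) by (rewrite c_147E1_1237, c_147E1_1256, c_147E1_1346, c_147E1_2345, c_147E1_2346; field).
    rewrite !Hd in HT. apply (Rmult_eq_reg_l ((l - 2) * (l + 2))); [rewrite HT; field | nzf]. }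
  assert (T457 : A f 4 5 7 = 0).
  { assert (HT : 1 * A f 4 5 7 = ((1)) * dphi (L147E1 l) f (eb 1) (eb 2) (eb 5) (eb 7)) by (rewrite c_147E1_1257; field).
    rewrite !Hd in HT. apply (Rmult_eq_reg_l (1)); [rewrite HT; field | nzf]. }
  assert (T467 : A f 4 6 7 = 0).
  { assert (HT : 1 * A f 4 6 7 = ((1)) * dphi (L147E1 l) f (eb 1) (eb 2) (eb 6) (eb 7)) by (rewrite c_147E1_1267; field).
    rewrite !Hd in HT. apply (Rmult_eq_reg_l (1)); [rewrite HT; field | nzf]. }
  apply (nondeg f (eb 4) Hc).
  - intro Z. rewrite phi_lin3. unfold sum7.
    replace (phi f (eb 7) (eb 4) (eb 1)) with (-1 * A f 1 4 7) by (unfold A; rewrite !phi_ebb by lia; unfold Phi0, W0; ring). rewrite T147.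
    replace (phi f (eb 7) (eb 4) (eb 2)) with (-1 * A f 2 4 7) by (unfold A; rewrite !phi_ebb by lia; unfold Phi0, W0; ring). rewrite T247.
    replace (phi f (eb 7) (eb 4) (eb 3)) with (-1 * A f 3 4 7) by (unfold A; rewrite !phi_ebb by lia; unfold Phi0, W0; ring). rewrite T347.
    replace (phi f (eb 7) (eb 4) (eb 4)) with 0 by (rewrite !phi_ebb by lia; unfold Phi0, W0; ring).
    replace (phi f (eb 7) (eb 4) (eb 5)) with (1 * A f 4 5 7) by (unfold A; rewrite !phi_ebb by lia; unfold Phi0, W0; ring). rewrite T457.
    replace (phi f (eb 7) (eb 4) (eb 6)) with (1 * A f 4 6 7) by (unfold A; rewrite !phi_ebb by lia; unfold Phi0, W0; ring). rewrite T467.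
    replace (phi f (eb 7) (eb 4) (eb 7)) with 0 by (rewrite !phi_ebb by lia; unfold Phi0, W0; ring).
    ring.
  - reflexivity.
  - exists 4%nat. split; [lia | unfold eb; simpl; lra].
Qed.

Lemma no_1357QRS1 l f : l <> 0 -> l <> 1 -> calibrated (L1357QRS1 l) f -> False.
Proof.
  intros Hh0 Hh1 [Hc Hd].
  assert (T157 : A f 1 5 7 = 0).
  { assert (HT : (l * l - l + 1) * A f 1 5 7 = ((-1/2)) * dphi (L1357QRS1 l) f (eb 1) (eb 2) (eb 4) (eb 7) + ((-1/2) * l) * dphi (L1357QRS1 l) f (eb 1) (eb 2) (eb 5) (eb 6) + ((1/2) + (-1/2) * l) * dphi (L1357QRS1 l) f (eb 1) (eb 3) (eb 4) (eb 5) + ((1/2)) * dphi (L1357QRS1 l) f (eb 2) (eb 3) (eb 4) (eb 6)) by (rewrite c_1357QRS1_1247, c_1357QRS1_1256, c_1357QRS1_1345, c_1357QRS1_2346; field).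
    rewrite !Hd in HT. apply (Rmult_eq_reg_l ((l * l - l + 1))); [rewrite HT; field | nzf]. }
  assert (T257 : A f 2 5 7 = 0).
  { assert (HT : (l - 1) * A f 2 5 7 = ((-1/2) + (1/2) * l) * dphi (L1357QRS1 l) f (eb 1) (eb 2) (eb 3) (eb 7) + ((1/2)) * dphi (L1357QRS1 l) f (eb 1) (eb 3) (eb 4) (eb 6) + ((-1/2)) * dphi (L1357QRS1 l) f (eb 2) (eb 3) (eb 4) (eb 5)) by (rewrite c_1357QRS1_1237, c_1357QRS1_1346, c_1357QRS1_2345; field).
    rewrite !Hd in HT. apply (Rmult_eq_reg_l ((l - 1))); [rewrite HT; field | nzf]. }
  assert (T357 : A f 3 5 7 = 0).
  { assert (HT : 1 * A f 3 5 7 = ((1)) * dphi (L1357QRS1 l) f (eb 1) (eb 2) (eb 5) (eb 7)) by (rewrite c_1357QRS1_1257; field).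
    rewrite !Hd in HT. apply (Rmult_eq_reg_l (1)); [rewrite HT; field | nzf]. }
  assert (T457 : A f 4 5 7 = 0).
  { assert (HT : l * A f 4 5 7 = ((1)) * dphi (L1357QRS1 l) f (eb 2) (eb 4) (eb 5) (eb 6)) by (rewrite c_1357QRS1_2456; field).
    rewrite !Hd in HT. apply (Rmult_eq_reg_l (l)); [rewrite HT; field | nzf]. }
  assert (T567 : A f 5 6 7 = 0).
  { assert (HT : 1 * A f 5 6 7 = ((1)) * dphi (L1357QRS1 l) f (eb 1) (eb 3) (eb 6) (eb 7)) by (rewrite c_1357QRS1_1367; field).
    rewrite !Hd in HT. apply (Rmult_eq_reg_l (1)); [rewrite HT; field | nzf]. }
  apply (nondeg f (eb 5) Hc).
  - intro Z. rewrite phi_lin3. unfold sum7.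
    replace (phi f (eb 7) (eb 5) (eb 1)) with (-1 * A f 1 5 7) by (unfold A; rewrite !phi_ebb by lia; unfold Phi0, W0; ring). rewrite T157.
    replace (phi f (eb 7) (eb 5) (eb 2)) with (-1 * A f 2 5 7) by (unfold A; rewrite !phi_ebb by lia; unfold Phi0, W0; ring). rewrite T257.
    replace (phi f (eb 7) (eb 5) (eb 3)) with (-1 * A f 3 5 7) by (unfold A; rewrite !phi_ebb by lia; unfold Phi0, W0; ring). rewrite T357.
    replace (phi f (eb 7) (eb 5) (eb 4)) with (-1 * A f 4 5 7) by (unfold A; rewrite !phi_ebb by lia; unfold Phi0, W0; ring). rewrite T457.
    replace (phi f (eb 7) (eb 5) (eb 5)) with 0 by (rewrite !phi_ebb by lia; unfold Phi0, W0; ring).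
    replace (phi f (eb 7) (eb 5) (eb 6)) with (1 * A f 5 6 7) by (unfold A; rewrite !phi_ebb by lia; unfold Phi0, W0; ring). rewrite T567.
    replace (phi f (eb 7) (eb 5) (eb 7)) with 0 by (rewrite !phi_ebb by lia; unfold Phi0, W0; ring).
    ring.
  - reflexivity.
  - exists 5%nat. split; [lia | unfold eb; simpl; lra].
Qed.

Lemma no_12457N2 l f : calibrated (L12457N2 l) f -> False.
Proof.
  intros  [Hc Hd].
  assert (T167 : A f 1 6 7 = 0).
  { assert (HT : 1 * A f 1 6 7 = ((1/2)) * dphi (L12457N2 l) f (eb 1) (eb 2) (eb 5) (eb 7) + ((-1)) * dphi (L12457N2 l) f (eb 1) (eb 2) (eb 6) (eb 7) + ((-1/2)) * dphi (L12457N2 l) f (eb 1) (eb 3) (eb 5) (eb 6) + ((-1/2)) * dphi (L12457N2 l) f (eb 2) (eb 3) (eb 4) (eb 6)) by (rewrite c_12457N2_1257, c_12457N2_1267, c_12457N2_1356, c_12457N2_2346; field).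
    rewrite !Hd in HT. apply (Rmult_eq_reg_l (1)); [rewrite HT; field | nzf]. }
  assert (T267 : A f 2 6 7 = 0).
  { assert (HT : 1 * A f 2 6 7 = ((-1)) * dphi (L12457N2 l) f (eb 1) (eb 2) (eb 4) (eb 7) + ((1)) * dphi (L12457N2 l) f (eb 1) (eb 3) (eb 4) (eb 6)) by (rewrite c_12457N2_1247, c_12457N2_1346; field).
    rewrite !Hd in HT. apply (Rmult_eq_reg_l (1)); [rewrite HT; field | nzf]. }
  assert (T367 : A f 3 6 7 = 0).
  { assert (HT : 1 * A f 3 6 7 = ((1)) * dphi (L12457N2 l) f (eb 1) (eb 2) (eb 6) (eb 7)) by (rewrite c_12457N2_1267; field).
    rewrite !Hd in HT. apply (Rmult_eq_reg_l (1)); [rewrite HT; field | nzf]. }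
  assert (T467 : A f 4 6 7 = 0).
  { assert (HT : 1 * A f 4 6 7 = ((1)) * dphi (L12457N2 l) f (eb 1) (eb 3) (eb 6) (eb 7)) by (rewrite c_12457N2_1367; field).
    rewrite !Hd in HT. apply (Rmult_eq_reg_l (1)); [rewrite HT; field | nzf]. }
  assert (T567 : A f 5 6 7 = 0).
  { assert (HT : 1 * A f 5 6 7 = ((1)) * dphi (L12457N2 l) f (eb 1) (eb 4) (eb 5) (eb 7)) by (rewrite c_12457N2_1457; field).
    rewrite !Hd in HT. apply (Rmult_eq_reg_l (1)); [rewrite HT; field | nzf]. }
  apply (nondeg f (eb 6) Hc).
  - intro Z. rewrite phi_lin3. unfold sum7.
    replace (phi f (eb 7) (eb 6) (eb 1)) with (-1 * A f 1 6 7) by (unfold A; rewrite !phi_ebb by lia; unfold Phi0, W0; ring). rewrite T167.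
    replace (phi f (eb 7) (eb 6) (eb 2)) with (-1 * A f 2 6 7) by (unfold A; rewrite !phi_ebb by lia; unfold Phi0, W0; ring). rewrite T267.
    replace (phi f (eb 7) (eb 6) (eb 3)) with (-1 * A f 3 6 7) by (unfold A; rewrite !phi_ebb by lia; unfold Phi0, W0; ring). rewrite T367.
    replace (phi f (eb 7) (eb 6) (eb 4)) with (-1 * A f 4 6 7) by (unfold A; rewrite !phi_ebb by lia; unfold Phi0, W0; ring). rewrite T467.
    replace (phi f (eb 7) (eb 6) (eb 5)) with (-1 * A f 5 6 7) by (unfold A; rewrite !phi_ebb by lia; unfold Phi0, W0; ring). rewrite T567.
    replace (phi f (eb 7) (eb 6) (eb 6)) with 0 by (rewrite !phi_ebb by lia; unfold Phi0, W0; ring).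
    replace (phi f (eb 7) (eb 6) (eb 7)) with 0 by (rewrite !phi_ebb by lia; unfold Phi0, W0; ring).
    ring.
  - reflexivity.
  - exists 6%nat. split; [lia | unfold eb; simpl; lra].
Qed.

Lemma c_1357QRS1_1267 l f : dphi (L1357QRS1 l) f (eb 1) (eb 2) (eb 6) (eb 7) =
  ((1)) * A f 3 6 7.
Proof. convt L1357QRS1. Qed.

Lemma c_1357QRS1_1456 l f : dphi (L1357QRS1 l) f (eb 1) (eb 4) (eb 5) (eb 6) =
  ((-1)) * A f 4 6 7.
Proof. convt L1357QRS1. Qed.

Lemma no_1357QRS1_1 f : calibrated (L1357QRS1 (1)) f -> False.
Proof.
  intros [Hc Hd].
  assert (T157 : A f 1 5 7 = 0).
  { assert (HT : 1 * A f 1 5 7 = ((-1/2)) * dphi (L1357QRS1 ((1))) f (eb 1) (eb 2) (eb 4) (eb 7) + ((-1/2)) * dphi (L1357QRS1 ((1))) f (eb 1) (eb 2) (eb 5) (eb 6) + ((1/2)) * dphi (L1357QRS1 ((1))) f (eb 2) (eb 3) (eb 4) (eb 6)) by (rewrite c_1357QRS1_1247, c_1357QRS1_1256, c_1357QRS1_2346; field).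
    rewrite !Hd in HT. apply (Rmult_eq_reg_l (1)); [rewrite HT; field | nzf]. }
  assert (T267 : A f 2 6 7 = 0).
  { assert (HT : 1 * A f 2 6 7 = ((1/2)) * dphi (L1357QRS1 ((1))) f (eb 1) (eb 2) (eb 4) (eb 7) + ((-1/2)) * dphi (L1357QRS1 ((1))) f (eb 1) (eb 2) (eb 5) (eb 6) + ((-1/2)) * dphi (L1357QRS1 ((1))) f (eb 1) (eb 3) (eb 4) (eb 5)) by (rewrite c_1357QRS1_1247, c_1357QRS1_1256, c_1357QRS1_1345; field).
    rewrite !Hd in HT. apply (Rmult_eq_reg_l (1)); [rewrite HT; field | nzf]. }
  assert (T347 : A f 3 4 7 = 0).
  { assert (HT : 1 * A f 3 4 7 = ((1/2)) * dphi (L1357QRS1 ((1))) f (eb 1) (eb 3) (eb 4) (eb 5) + ((1/2)) * dphi (L1357QRS1 ((1))) f (eb 2) (eb 3) (eb 4) (eb 6)) by (rewrite c_1357QRS1_1345, c_1357QRS1_2346; field).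
    rewrite !Hd in HT. apply (Rmult_eq_reg_l (1)); [rewrite HT; field | nzf]. }
  assert (T357 : A f 3 5 7 = 0).
  { assert (HT : 1 * A f 3 5 7 = ((1)) * dphi (L1357QRS1 ((1))) f (eb 1) (eb 2) (eb 5) (eb 7)) by (rewrite c_1357QRS1_1257; field).
    rewrite !Hd in HT. apply (Rmult_eq_reg_l (1)); [rewrite HT; field | nzf]. }
  assert (T367 : A f 3 6 7 = 0).
  { assert (HT : 1 * A f 3 6 7 = ((1)) * dphi (L1357QRS1 ((1))) f (eb 1) (eb 2) (eb 6) (eb 7)) by (rewrite c_1357QRS1_1267; field).
    rewrite !Hd in HT. apply (Rmult_eq_reg_l (1)); [rewrite HT; field | nzf]. }
  assert (T457 : A f 4 5 7 = 0).
  { assert (HT : 1 * A f 4 5 7 = ((1)) * dphi (L1357QRS1 ((1))) f (eb 2) (eb 4) (eb 5) (eb 6)) by (rewrite c_1357QRS1_2456; field).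
    rewrite !Hd in HT. apply (Rmult_eq_reg_l (1)); [rewrite HT; field | nzf]. }
  assert (T467 : A f 4 6 7 = 0).
  { assert (HT : 1 * A f 4 6 7 = ((-1)) * dphi (L1357QRS1 ((1))) f (eb 1) (eb 4) (eb 5) (eb 6)) by (rewrite c_1357QRS1_1456; field).
    rewrite !Hd in HT. apply (Rmult_eq_reg_l (1)); [rewrite HT; field | nzf]. }
  assert (T567 : A f 5 6 7 = 0).
  { assert (HT : 1 * A f 5 6 7 = ((1)) * dphi (L1357QRS1 ((1))) f (eb 1) (eb 3) (eb 6) (eb 7)) by (rewrite c_1357QRS1_1367; field).
    rewrite !Hd in HT. apply (Rmult_eq_reg_l (1)); [rewrite HT; field | nzf]. }
  assert (P11 : phi f (eb 7) (eb 1) (eb 1) = 0) by (rewrite !phi_ebb by lia; unfold Phi0, W0; ring).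
  assert (P15 : phi f (eb 7) (eb 1) (eb 5) = 0) by (replace (phi f (eb 7) (eb 1) (eb 5)) with (1 * A f 1 5 7) by (unfold A; rewrite !phi_ebb by lia; unfold Phi0, W0; ring); rewrite T157; ring).
  assert (P17 : phi f (eb 7) (eb 1) (eb 7) = 0) by (rewrite !phi_ebb by lia; unfold Phi0, W0; ring).
  assert (P22 : phi f (eb 7) (eb 2) (eb 2) = 0) by (rewrite !phi_ebb by lia; unfold Phi0, W0; ring).
  assert (P26 : phi f (eb 7) (eb 2) (eb 6) = 0) by (replace (phi f (eb 7) (eb 2) (eb 6)) with (1 * A f 2 6 7) by (unfold A; rewrite !phi_ebb by lia; unfold Phi0, W0; ring); rewrite T267; ring).
  assert (P27 : phi f (eb 7) (eb 2) (eb 7) = 0) by (rewrite !phi_ebb by lia; unfold Phi0, W0; ring).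
  assert (P33 : phi f (eb 7) (eb 3) (eb 3) = 0) by (rewrite !phi_ebb by lia; unfold Phi0, W0; ring).
  assert (P34 : phi f (eb 7) (eb 3) (eb 4) = 0) by (replace (phi f (eb 7) (eb 3) (eb 4)) with (1 * A f 3 4 7) by (unfold A; rewrite !phi_ebb by lia; unfold Phi0, W0; ring); rewrite T347; ring).
  assert (P35 : phi f (eb 7) (eb 3) (eb 5) = 0) by (replace (phi f (eb 7) (eb 3) (eb 5)) with (1 * A f 3 5 7) by (unfold A; rewrite !phi_ebb by lia; unfold Phi0, W0; ring); rewrite T357; ring).
  assert (P36 : phi f (eb 7) (eb 3) (eb 6) = 0) by (replace (phi f (eb 7) (eb 3) (eb 6)) with (1 * A f 3 6 7) by (unfold A; rewrite !phi_ebb by lia; unfold Phi0, W0; ring); rewrite T367; ring).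
  assert (P37 : phi f (eb 7) (eb 3) (eb 7) = 0) by (rewrite !phi_ebb by lia; unfold Phi0, W0; ring).
  assert (P43 : phi f (eb 7) (eb 4) (eb 3) = 0) by (replace (phi f (eb 7) (eb 4) (eb 3)) with (-1 * A f 3 4 7) by (unfold A; rewrite !phi_ebb by lia; unfold Phi0, W0; ring); rewrite T347; ring).
  assert (P44 : phi f (eb 7) (eb 4) (eb 4) = 0) by (rewrite !phi_ebb by lia; unfold Phi0, W0; ring).
  assert (P45 : phi f (eb 7) (eb 4) (eb 5) = 0) by (replace (phi f (eb 7) (eb 4) (eb 5)) with (1 * A f 4 5 7) by (unfold A; rewrite !phi_ebb by lia; unfold Phi0, W0; ring); rewrite T457; ring).
  assert (P46 : phi f (eb 7) (eb 4) (eb 6) = 0) by (replace (phi f (eb 7) (eb 4) (eb 6)) with (1 * A f 4 6 7) by (unfold A; rewrite !phi_ebb by lia; unfold Phi0, W0; ring); rewrite T467; ring).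
  assert (P47 : phi f (eb 7) (eb 4) (eb 7) = 0) by (rewrite !phi_ebb by lia; unfold Phi0, W0; ring).
  assert (P51 : phi f (eb 7) (eb 5) (eb 1) = 0) by (replace (phi f (eb 7) (eb 5) (eb 1)) with (-1 * A f 1 5 7) by (unfold A; rewrite !phi_ebb by lia; unfold Phi0, W0; ring); rewrite T157; ring).
  assert (P53 : phi f (eb 7) (eb 5) (eb 3) = 0) by (replace (phi f (eb 7) (eb 5) (eb 3)) with (-1 * A f 3 5 7) by (unfold A; rewrite !phi_ebb by lia; unfold Phi0, W0; ring); rewrite T357; ring).
  assert (P54 : phi f (eb 7) (eb 5) (eb 4) = 0) by (replace (phi f (eb 7) (eb 5) (eb 4)) with (-1 * A f 4 5 7) by (unfold A; rewrite !phi_ebb by lia; unfold Phi0, W0; ring); rewrite T457; ring).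
  assert (P55 : phi f (eb 7) (eb 5) (eb 5) = 0) by (rewrite !phi_ebb by lia; unfold Phi0, W0; ring).
  assert (P56 : phi f (eb 7) (eb 5) (eb 6) = 0) by (replace (phi f (eb 7) (eb 5) (eb 6)) with (1 * A f 5 6 7) by (unfold A; rewrite !phi_ebb by lia; unfold Phi0, W0; ring); rewrite T567; ring).
  assert (P57 : phi f (eb 7) (eb 5) (eb 7) = 0) by (rewrite !phi_ebb by lia; unfold Phi0, W0; ring).
  assert (P62 : phi f (eb 7) (eb 6) (eb 2) = 0) by (replace (phi f (eb 7) (eb 6) (eb 2)) with (-1 * A f 2 6 7) by (unfold A; rewrite !phi_ebb by lia; unfold Phi0, W0; ring); rewrite T267; ring).
  assert (P63 : phi f (eb 7) (eb 6) (eb 3) = 0) by (replace (phi f (eb 7) (eb 6) (eb 3)) with (-1 * A f 3 6 7) by (unfold A; rewrite !phi_ebb by lia; unfold Phi0, W0; ring); rewrite T367; ring).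
  assert (P64 : phi f (eb 7) (eb 6) (eb 4) = 0) by (replace (phi f (eb 7) (eb 6) (eb 4)) with (-1 * A f 4 6 7) by (unfold A; rewrite !phi_ebb by lia; unfold Phi0, W0; ring); rewrite T467; ring).
  assert (P65 : phi f (eb 7) (eb 6) (eb 5) = 0) by (replace (phi f (eb 7) (eb 6) (eb 5)) with (-1 * A f 5 6 7) by (unfold A; rewrite !phi_ebb by lia; unfold Phi0, W0; ring); rewrite T567; ring).
  assert (P66 : phi f (eb 7) (eb 6) (eb 6) = 0) by (rewrite !phi_ebb by lia; unfold Phi0, W0; ring).
  assert (P67 : phi f (eb 7) (eb 6) (eb 7) = 0) by (rewrite !phi_ebb by lia; unfold Phi0, W0; ring).
  assert (P71 : phi f (eb 7) (eb 7) (eb 1) = 0) by (rewrite !phi_ebb by lia; unfold Phi0, W0; ring).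
  assert (P72 : phi f (eb 7) (eb 7) (eb 2) = 0) by (rewrite !phi_ebb by lia; unfold Phi0, W0; ring).
  assert (P73 : phi f (eb 7) (eb 7) (eb 3) = 0) by (rewrite !phi_ebb by lia; unfold Phi0, W0; ring).
  assert (P74 : phi f (eb 7) (eb 7) (eb 4) = 0) by (rewrite !phi_ebb by lia; unfold Phi0, W0; ring).
  assert (P75 : phi f (eb 7) (eb 7) (eb 5) = 0) by (rewrite !phi_ebb by lia; unfold Phi0, W0; ring).
  assert (P76 : phi f (eb 7) (eb 7) (eb 6) = 0) by (rewrite !phi_ebb by lia; unfold Phi0, W0; ring).
  assert (P77 : phi f (eb 7) (eb 7) (eb 7) = 0) by (rewrite !phi_ebb by lia; unfold Phi0, W0; ring).
  destruct (Req_dec (phi f (eb 7) (eb 5) (eb 2)) 0) as [Hb5|Hb5].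
  { apply (nondeg f (eb 5) Hc).
    - intro Z. rewrite phi_lin3. unfold sum7. rewrite P51, Hb5, P53, P54, P55, P56, P57. ring.
    - reflexivity.
    - exists 5%nat. split; [lia | unfold eb; simpl; lra]. }
  destruct (Req_dec (phi f (eb 7) (eb 6) (eb 1)) 0) as [Ha6|Ha6].
  { apply (nondeg f (eb 6) Hc).
    - intro Z. rewrite phi_lin3. unfold sum7. rewrite Ha6, P62, P63, P64, P65, P66, P67. ring.
    - reflexivity.
    - exists 6%nat. split; [lia | unfold eb; simpl; lra]. }
  set (a3 := phi f (eb 7) (eb 3) (eb 1)) in *.
  set (a6 := phi f (eb 7) (eb 6) (eb 1)) in *.
  set (b3 := phi f (eb 7) (eb 3) (eb 2)) in *.
  set (b5 := phi f (eb 7) (eb 5) (eb 2)) in *.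
  apply (nondeg f (fun j => match j with 3%nat => b5 * a6 | 5%nat => - (b3 * a6) | 6%nat => - (b5 * a3) | _ => 0 end) Hc).
  - intro Z. rewrite phi_lin3. unfold sum7.
    rewrite (phi_lin2 f (eb 7) _ (eb 1)), (phi_lin2 f (eb 7) _ (eb 2)), (phi_lin2 f (eb 7) _ (eb 3)),
      (phi_lin2 f (eb 7) _ (eb 4)), (phi_lin2 f (eb 7) _ (eb 5)), (phi_lin2 f (eb 7) _ (eb 6)),
      (phi_lin2 f (eb 7) _ (eb 7)).
    unfold sum7. cbv beta iota.
    fold a3 a6 b3 b5.
    rewrite P51, P62, P33, P34, P35, P36, P37, P53, P54, P55, P56, P57, P63, P64, P65, P66, P67.
    ring.
  - reflexivity.
  - exists 3%nat. split; [lia|]. cbv beta iota. apply Rmult_integral_contrapositive_currified; assumption.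
Qed.


Definition phiW (k : nat -> R) (f : frame) (x y z : vec) : R :=
  k 1%nat * w3 f 1 2 7 x y z + k 2%nat * w3 f 3 4 7 x y z + k 3%nat * w3 f 5 6 7 x y z + k 4%nat * w3 f 1 3 5 x y z
  - k 5%nat * w3 f 2 3 6 x y z - k 6%nat * w3 f 1 4 6 x y z - k 7%nat * w3 f 2 4 5 x y z.
Definition dW (L : lie7) k (f : frame) (x0 x1 x2 x3 : vec) : R :=
  - phiW k f (br L x0 x1) x2 x3 + phiW k f (br L x0 x2) x1 x3 - phiW k f (br L x0 x3) x1 x2
  - phiW k f (br L x1 x2) x0 x3 + phiW k f (br L x1 x3) x0 x2 - phiW k f (br L x2 x3) x0 x1.

Lemma w3_scale f g a b c ca cb cc x y z :
  (forall x, ev1 (f a) x = ca * ev1 (g a) x) -> (forall x, ev1 (f b) x = cb * ev1 (g b) x) ->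
  (forall x, ev1 (f c) x = cc * ev1 (g c) x) ->
  w3 f a b c x y z = ca * cb * cc * w3 g a b c x y z.
Proof. intros Ha Hb Hc. unfold w3. rewrite !Ha, !Hb, !Hc. ring. Qed.

Ltac scl := intros; unfold ev1, sum7, co; simpl; ring.

Definition gN : frame := fun a => match a with
  | 1%nat => co [(2 , 1%nat); (- 1, 7%nat); (- 1, 6%nat); (- 1, 5%nat)]
  | 2%nat => co [(1, 4%nat); (1, 3%nat); (-2 , 2%nat); (- 1, 6%nat); (1, 5%nat)]
  | 7%nat => co [(- 1, 6%nat)]
  | a => frame_1357N a end.
Definition kN : nat -> R := fun i => match i with 1%nat => 3 | _ => 1 end.
Definition cN : nat -> R := fun i => match i with 1%nat | 2%nat | 7%nat => sqrt 3 | _ => 1 end.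
Lemma scN a x : ev1 (frame_1357N a) x = cN a * ev1 (gN a) x.
Proof. destruct a as [|[|[|[|[|[|[|[|a]]]]]]]]; unfold cN, gN, frame_1357N; try ring; scl. Qed.

Lemma phiN x y z : phi frame_1357N x y z = sqrt 3 * phiW kN gN x y z.
Proof.
  unfold phi.
  rewrite !(w3_scale frame_1357N gN _ _ _ _ _ _ x y z (scN _) (scN _) (scN _)).
  unfold phiW, kN, cN.
  assert (H3 : sqrt 3 * sqrt 3 = 3) by (apply sqrt_sqrt; lra).
  nsatz.
Qed.

Lemma dWN x0 x1 x2 x3 : dW (L1357N 1) kN gN x0 x1 x2 x3 = 0.
Proof.
  unfold dW, phiW, w3, ev1, sum7, br, ev2, gN, frame_1357N, kN, co, L1357N; simpl.
  ring.
Qed.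

Lemma calN : calibrated (L1357N 1) frame_1357N.
Proof.
  split.
  - intros a H i Hi.
    assert (E1 := H (fun j => if Nat.eqb j 1 then 1 else 0)).
    assert (E2 := H (fun j => if Nat.eqb j 2 then 1 else 0)).
    assert (E3 := H (fun j => if Nat.eqb j 3 then 1 else 0)).
    assert (E4 := H (fun j => if Nat.eqb j 4 then 1 else 0)).
    assert (E5 := H (fun j => if Nat.eqb j 5 then 1 else 0)).
    assert (E6 := H (fun j => if Nat.eqb j 6 then 1 else 0)).
    assert (E7 := H (fun j => if Nat.eqb j 7 then 1 else 0)).
    unfold sum7, ev1, frame_1357N, co in E1, E2, E3, E4, E5, E6, E7; simpl in E1, E2, E3, E4, E5, E6, E7.
    unfold sum7 in E1, E2, E3, E4, E5, E6, E7; simpl in E1, E2, E3, E4, E5, E6, E7.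
    assert (Hs : sqrt 3 <> 0) by (apply Rgt_not_eq, sqrt_lt_R0; lra).
    assert (B1 : a 1%nat * sqrt 3 = 0) by lra.
    assert (B2 : a 2%nat * sqrt 3 = 0) by lra.
    assert (B7 : a 7%nat * sqrt 3 = 0) by lra.
    assert (B3 : a 3%nat = 0) by lra.
    assert (B4 : a 4%nat = 0) by lra.
    assert (B5 : a 5%nat = 0) by lra.
    assert (B6 : a 6%nat = 0) by lra.
    apply Rmult_integral in B1; apply Rmult_integral in B2; apply Rmult_integral in B7.
    destruct i as [|[|[|[|[|[|[|[|i]]]]]]]]; try lia; tauto.
  - intros. unfold dphi. rewrite !phiN. rewrite <- (Rmult_0_r (sqrt 3)).
    rewrite <- (dWN x0 x1 x2 x3). unfold dW. ring.
Qed.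
Definition gS : frame := fun a => match a with
  | 1%nat => co [(2, 1%nat); (1, 2%nat); (- 1, 5%nat); (1, 6%nat)]
  | 3%nat => co [(1, 3%nat); (2, 4%nat); (- (3/2), 7%nat)]
  | 5%nat => co [(- 1, 6%nat)]
  | 6%nat => co [(2, 5%nat); (1, 6%nat)]
  | 7%nat => co [(-2, 3%nat)]
  | a => frame_1357S a end.
Definition kS : nat -> R := fun i => match i with 3%nat => 10 | 4%nat => 7 | _ => 1 end.
Definition cS : nat -> R := fun i => match i with 1%nat | 3%nat => sqrt 7 | 5%nat => sqrt 70 | 6%nat | 7%nat => sqrt 10 | _ => 1 end.
Lemma scS a x : ev1 (frame_1357S a) x = cS a * ev1 (gS a) x.
Proof. destruct a as [|[|[|[|[|[|[|[|a]]]]]]]]; unfold cS, gS, frame_1357S; try ring; scl. Qed.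

Lemma phiS x y z : phi frame_1357S x y z = sqrt 70 * phiW kS gS x y z.
Proof.
  unfold phi.
  rewrite !(w3_scale frame_1357S gS _ _ _ _ _ _ x y z (scS _) (scS _) (scS _)).
  unfold phiW, kS, cS.
  assert (H7 : sqrt 7 * sqrt 7 = 7) by (apply sqrt_sqrt; lra).
  assert (H10 : sqrt 10 * sqrt 10 = 10) by (apply sqrt_sqrt; lra).
  assert (H70 : sqrt 70 = sqrt 7 * sqrt 10) by (rewrite <- sqrt_mult by lra; f_equal; lra).
  nsatz.
Qed.

Lemma dWS x0 x1 x2 x3 : dW (L1357S (-3)) kS gS x0 x1 x2 x3 = 0.
Proof.
  unfold dW, phiW, w3, ev1, sum7, br, ev2, gS, frame_1357S, kS, co, L1357S; simpl.
  repeat (unfold sum7, ev1, frame_1357S, co; simpl).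
  field.
Qed.

Lemma calS : calibrated (L1357S (-3)) frame_1357S.
Proof.
  split.
  - intros a H i Hi.
    assert (E1 := H (fun j => if Nat.eqb j 1 then 1 else 0)).
    assert (E2 := H (fun j => if Nat.eqb j 2 then 1 else 0)).
    assert (E3 := H (fun j => if Nat.eqb j 3 then 1 else 0)).
    assert (E4 := H (fun j => if Nat.eqb j 4 then 1 else 0)).
    assert (E5 := H (fun j => if Nat.eqb j 5 then 1 else 0)).
    assert (E6 := H (fun j => if Nat.eqb j 6 then 1 else 0)).
    assert (E7 := H (fun j => if Nat.eqb j 7 then 1 else 0)).
    unfold sum7, ev1, frame_1357S, co in E1, E2, E3, E4, E5, E6, E7; simpl in E1, E2, E3, E4, E5, E6, E7.
    unfold sum7 in E1, E2, E3, E4, E5, E6, E7; simpl in E1, E2, E3, E4, E5, E6, E7.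
    assert (B1 : a 1%nat * sqrt 7 = 0) by lra.
    assert (B3 : a 3%nat * sqrt 7 = 0) by lra.
    assert (B5 : a 5%nat * sqrt 70 = 0) by lra.
    assert (B6 : a 6%nat * sqrt 10 = 0) by lra.
    assert (B7 : a 7%nat * sqrt 10 = 0) by lra.
    assert (B2 : a 2%nat = 0) by lra.
    assert (B4 : a 4%nat = 0) by lra.
    apply Rmult_integral in B1.
    apply Rmult_integral in B3.
    apply Rmult_integral in B5.
    apply Rmult_integral in B6.
    apply Rmult_integral in B7.
    assert (Hs1 : sqrt 7 <> 0) by (apply Rgt_not_eq, sqrt_lt_R0; lra).
    assert (Hs3 : sqrt 7 <> 0) by (apply Rgt_not_eq, sqrt_lt_R0; lra).
    assert (Hs5 : sqrt 70 <> 0) by (apply Rgt_not_eq, sqrt_lt_R0; lra).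
    assert (Hs6 : sqrt 10 <> 0) by (apply Rgt_not_eq, sqrt_lt_R0; lra).
    assert (Hs7 : sqrt 10 <> 0) by (apply Rgt_not_eq, sqrt_lt_R0; lra).
    destruct i as [|[|[|[|[|[|[|[|i]]]]]]]]; try lia; tauto.
  - intros. unfold dphi. rewrite !phiS. rewrite <- (Rmult_0_r (sqrt 70)).
    rewrite <- (dWS x0 x1 x2 x3). unfold dW. ring.
Qed.
Definition gE : frame := fun a => match a with
  | 1%nat => co [(2, 1%nat); (1, 5%nat); (- 1, 2%nat); (1, 6%nat)]
  | 4%nat => co [(1, 3%nat); (1, 7%nat)]
  | 5%nat => co [(1, 6%nat); (- 1, 5%nat)]
  | 6%nat => co [(1, 5%nat); (1, 6%nat)]
  | 7%nat => co [(2, 4%nat); (-2, 3%nat)]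
  | a => frame_147E1 a end.
Definition kE : nat -> R := fun i => match i with 3%nat => 2 | 6%nat => 3 | _ => 1 end.
Definition cE : nat -> R := fun i => match i with 1%nat | 4%nat => sqrt 3 | 5%nat | 7%nat => sqrt 2 | 6%nat => sqrt 6 | _ => 1 end.
Lemma scE a x : ev1 (frame_147E1 a) x = cE a * ev1 (gE a) x.
Proof. destruct a as [|[|[|[|[|[|[|[|a]]]]]]]]; unfold cE, gE, frame_147E1; try ring; scl. Qed.

Lemma phiE x y z : phi frame_147E1 x y z = sqrt 6 * phiW kE gE x y z.
Proof.
  unfold phi.
  rewrite !(w3_scale frame_147E1 gE _ _ _ _ _ _ x y z (scE _) (scE _) (scE _)).
  unfold phiW, kE, cE.
  assert (H3 : sqrt 3 * sqrt 3 = 3) by (apply sqrt_sqrt; lra).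
  assert (H2 : sqrt 2 * sqrt 2 = 2) by (apply sqrt_sqrt; lra).
  assert (H6 : sqrt 6 = sqrt 2 * sqrt 3) by (rewrite <- sqrt_mult by lra; f_equal; lra).
  nsatz.
Qed.

Lemma dWE x0 x1 x2 x3 : dW (L147E1 2) kE gE x0 x1 x2 x3 = 0.
Proof.
  unfold dW, phiW, w3, ev1, sum7, br, ev2, gE, frame_147E1, kE, co, L147E1; simpl.
  ring.
Qed.

Lemma calE : calibrated (L147E1 2) frame_147E1.
Proof.
  split.
  - intros a H i Hi.
    assert (E1 := H (fun j => if Nat.eqb j 1 then 1 else 0)).
    assert (E2 := H (fun j => if Nat.eqb j 2 then 1 else 0)).
    assert (E3 := H (fun j => if Nat.eqb j 3 then 1 else 0)).
    assert (E4 := H (fun j => if Nat.eqb j 4 then 1 else 0)).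
    assert (E5 := H (fun j => if Nat.eqb j 5 then 1 else 0)).
    assert (E6 := H (fun j => if Nat.eqb j 6 then 1 else 0)).
    assert (E7 := H (fun j => if Nat.eqb j 7 then 1 else 0)).
    unfold sum7, ev1, frame_147E1, co in E1, E2, E3, E4, E5, E6, E7; simpl in E1, E2, E3, E4, E5, E6, E7.
    unfold sum7 in E1, E2, E3, E4, E5, E6, E7; simpl in E1, E2, E3, E4, E5, E6, E7.
    assert (B1 : a 1%nat * sqrt 3 = 0) by lra.
    assert (B4 : a 4%nat * sqrt 3 = 0) by lra.
    assert (B5 : a 5%nat * sqrt 2 = 0) by lra.
    assert (B6 : a 6%nat * sqrt 6 = 0) by lra.
    assert (B7 : a 7%nat * sqrt 2 = 0) by lra.
    assert (B2 : a 2%nat = 0) by lra.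
    assert (B3 : a 3%nat = 0) by lra.
    apply Rmult_integral in B1.
    apply Rmult_integral in B4.
    apply Rmult_integral in B5.
    apply Rmult_integral in B6.
    apply Rmult_integral in B7.
    assert (Hs1 : sqrt 3 <> 0) by (apply Rgt_not_eq, sqrt_lt_R0; lra).
    assert (Hs4 : sqrt 3 <> 0) by (apply Rgt_not_eq, sqrt_lt_R0; lra).
    assert (Hs5 : sqrt 2 <> 0) by (apply Rgt_not_eq, sqrt_lt_R0; lra).
    assert (Hs6 : sqrt 6 <> 0) by (apply Rgt_not_eq, sqrt_lt_R0; lra).
    assert (Hs7 : sqrt 2 <> 0) by (apply Rgt_not_eq, sqrt_lt_R0; lra).
    destruct i as [|[|[|[|[|[|[|[|i]]]]]]]]; try lia; tauto.
  - intros. unfold dphi. rewrite !phiE. rewrite <- (Rmult_0_r (sqrt 6)).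
    rewrite <- (dWE x0 x1 x2 x3). unfold dW. ring.
Qed.

Theorem lemma4p1 :
  (forall l : R, l <> 0 -> l <> 1 -> ~ admits_calibrated_G2 (L147E l)) /\
  (forall l : R, l <> 0 -> ~ admits_calibrated_G2 (L1357M l)) /\
  (forall l : R, admits_calibrated_G2 (L1357N l) <-> l = 1) /\
  (forall l : R, l <> 1 -> (admits_calibrated_G2 (L1357S l) <-> l = -3)) /\
  (forall l : R, ~ admits_calibrated_G2 (L12457N l)) /\
  (forall l : R, ~ admits_calibrated_G2 (L123457I l)) /\
  (forall l : R, l > 1 -> (admits_calibrated_G2 (L147E1 l) <-> l = 2)) /\
  (forall l : R, l <> 0 -> ~ admits_calibrated_G2 (L1357QRS1 l)) /\
  (forall l : R, l >= 0 -> ~ admits_calibrated_G2 (L12457N2 l)) /\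
  calibrated (L1357N 1) frame_1357N /\
  calibrated (L1357S (-3)) frame_1357S /\
  calibrated (L147E1 2) frame_147E1.
Proof.
  split; [intros l H0 H1 [f Hf]; exact (no_147E l f H0 H1 Hf)|].
  split; [intros l H0 [f Hf]; exact (no_1357M l f H0 Hf)|].
  split.
  { intros l. split.
    - intros [f Hf]. destruct (Req_dec l 1) as [E|E]; [exact E|exfalso].
      destruct (Req_dec l 0) as [E0|E0].
      + subst l. exact (no_1357N_0 f Hf).
      + exact (no_1357N l f E0 E Hf).
    - intros ->. exists frame_1357N. exact calN. }
  split.
  { intros l Hl. split.
    - intros [f Hf]. destruct (Req_dec l (-3)) as [E|E]; [exact E|exfalso].
      exact (no_1357S l f E Hf).
    - intros ->. exists frame_1357S. exact calS. }
  split; [intros l [f Hf]; exact (no_12457N l f Hf)|].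
  split; [intros l [f Hf]; exact (no_123457I l f Hf)|].
  split.
  { intros l Hl. split.
    - intros [f Hf]. destruct (Req_dec l 2) as [E|E]; [exact E|exfalso].
      exact (no_147E1 l f Hl E Hf).
    - intros ->. exists frame_147E1. exact calE. }
  split.
  { intros l H0 [f Hf]. destruct (Req_dec l 1) as [E|E].
    - subst l. exact (no_1357QRS1_1 f Hf).
    - exact (no_1357QRS1 l f H0 E Hf). }
  split; [intros l _ [f Hf]; exact (no_12457N2 l f Hf)|].
  split; [exact calN|]. split; [exact calS|exact calE].
Qed.
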